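(* For every integer $n>16$, the generalized Petersen graph $GP(n,3)$ is not $2$-distance-balanced.
   Context: For a connected graph $G$ and $x,y\in V(G)$, $d_G(x,y)$ denotes the distance. Let $W_{xy}=\{w\in V(G): d_G(w,x)<d_G(w,y)\}$. $G$ is called $\ell$-distance-balanced if $|W_{xy}|=|W_{yx}|$ for every pair $x,y\in V(G)$ with $d_G(x,y)=\ell$. For integers $n\ge 3$ and $1\le k<n/2$, the generalized Petersen graph $GP(n,k)$ has vertex set $\{u_i: i\in\mathbb{Z}_n\}\cup\{v_i: i\in\mathbb{Z}_n\}$ and edge set $\{u_iu_{i+1}: i\in\mathbb{Z}_n\}\cup\{v_iv_{i+k}: i\in\mathbb{Z}_n\}\cup\{u_iv_i: i\in\mathbb{Z}_n\}$. *)

(* Defs.v *)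
From mathcomp Require Import all_boot.
Set Implicit Arguments. Unset Strict Implicit. Unset Printing Implicit Defensive.

Section Graphs.
Variable T : finType.
Variable e : rel T.

Definition ball (x : T) (k : nat) : {set T} :=
  iter k (fun S => S :|: [set y | [exists z in S, e z y]]) [set x].

(* graph distance d(x,y): least k with y in ball x k
   (for a connected graph this is < #|T|; otherwise #|T| is returned) *)
Definition dist (x y : T) : nat :=
  find (fun k => y \in ball x k) (iota 0 #|T|).

Definition Wset (x y : T) : {set T} := [set w | dist w x < dist w y].

Definition dist_balanced (l : nat) : Prop :=
  forall x y : T, dist x y = l -> #|Wset x y| = #|Wset y x|.
End Graphs.

(* Generalized Petersen graph GP(n,k): vertex (false,i) = u_i, (true,i) = v_i.
   Edges u_i u_{i+1}, v_i v_{i+k}, u_i v_i (indices mod n). *)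
Definition GP_vertex (n : nat) := (bool * 'I_n)%type.

Definition GP_adj (n k : nat) : rel (GP_vertex n) :=
  fun a b =>
    let: (sa, i) := a in let: (sb, j) := b in
    if sa == sb then
      (if sa then (j == (i + k) %% n :> nat) || (i == (j + k) %% n :> nat)
       else (j == (i + 1) %% n :> nat) || (i == (j + 1) %% n :> nat))
    else (i == j).
Arguments GP_adj n k : clear implicits.
Arguments dist_balanced {T} e l.

(* Main.v *)
Require Import Defs.
From mathcomp Require Import all_boot zify.
Set Implicit Arguments. Unset Strict Implicit.

Section Cert.
Variable T : finType.
Variable e : rel T.
Variable x : T.
Variable f : T -> nat.
Hypothesis Lip : forall z y, e z y -> f z <= (f y).+1.
Hypothesis Desc : forall y, 0 < f y -> exists y', e y y' /\ f y' = (f y).-1.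
Hypothesis Zero : forall y, f y = 0 -> y = x.
Hypothesis fx : f x = 0.

Lemma ballS w k : ball e w k.+1 = ball e w k :|: [set y | [exists z in ball e w k, e z y]].
Proof. by rewrite /ball iterS. Qed.

Lemma ball_lb w k y : y \in ball e w k -> f w <= f y + k.
Proof.
elim: k y => [|k IH] y.
  by rewrite /ball /= in_set1 => /eqP ->; rewrite addn0.
rewrite ballS in_setU in_set => /orP [/IH H| /existsP [z /andP [zb ezy]]].
  by rewrite addnS ltnW // ltnS.
have := IH _ zb; have := Lip ezy; lia.
Qed.

Lemma ball_step w k z y : z \in ball e w k -> e z y -> y \in ball e w k.+1.
Proof.
move=> zb ezy; rewrite ballS in_setU in_set; apply/orP; right.
by apply/existsP; exists z; rewrite zb ezy.
Qed.

Lemma ball_ub w j : j <= f w -> exists y, y \in ball e w j /\ f y = f w - j.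
Proof.
elim: j => [|j IH] hj.
  by exists w; rewrite /ball /= in_set1 eqxx subn0.
have [y [yb fy]] := IH (ltnW hj).
have [y' [ey fy']] : exists y', e y y' /\ f y' = (f y).-1 by apply: Desc; lia.
exists y'; split; first exact: ball_step yb ey.
lia.
Qed.

Lemma dist_cert w : f w < #|T| -> dist e w x = f w.
Proof.
move=> hw.
have inb : x \in ball e w (f w).
  have [y [yb fy]] := ball_ub (leqnn (f w)).
  by rewrite subnn in fy; rewrite -(Zero fy).
have nb : forall j, j < f w -> x \notin ball e w j.
  move=> j hj; apply/negP => /ball_lb; rewrite fx; lia.
rewrite /dist.
set P := (fun k => x \in ball e w k).
have hasP : has P (iota 0 #|T|).
  apply/hasP; exists (f w) => //; rewrite mem_iota; lia.
have := nth_find 0 hasP; have := @before_find _ 0 P (iota 0 #|T|).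
have := find_size P (iota 0 #|T|); rewrite size_iota.
have hlt := hasP; rewrite has_find size_iota in hlt.
set k := find P (iota 0 #|T|) => _ bef nthk.
rewrite nth_iota // add0n in nthk.
case: (ltngtP k (f w)) => // [klt|kgt].
  by have := nb _ klt; rewrite /P in nthk; rewrite nthk.
have := bef _ kgt; rewrite nth_iota // ?add0n /P ?inb //; lia.
Qed.
End Cert.

Definition dd (s : bool) : nat := if s then 3 else 1.

Definition Du (s : bool) (m : nat) : nat :=
  if s then m %/ 3 + 1 + m %% 3 else minn m (m %/ 3 + 2 + m %% 3).
Definition Dv (s : bool) (m : nat) : nat :=
  if s then m %/ 3 + m %% 3 + 2 * minn (m %% 3) 1 else m %/ 3 + 1 + m %% 3.
Definition Hd (D : bool -> nat -> nat) (n : nat) (s : bool) (m : nat) :=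
  minn (D s m) (D s (n - m)).

Lemma modcase m d n : m < n -> d <= n ->
  (m + d < n /\ (m + d) %% n = m + d) \/ (n <= m + d /\ (m + d) %% n = m + d - n).
Proof.
move=> mn dn; case: (ltnP (m + d) n) => h.
  by left; split => //; rewrite modn_small.
right; split => //.
have -> : m + d = (m + d - n) + n by lia.
by rewrite modnDr addnK modn_small //; lia.
Qed.

Lemma modcase2 m d n : m < n -> d <= n ->
  (d <= m /\ (m + n - d) %% n = m - d) \/ (m < d /\ (m + n - d) %% n = m + n - d).
Proof.
move=> mn dn; case: (leqP d m) => h.
  left; split => //.
  have -> : m + n - d = (m - d) + n by lia.
  by rewrite modnDr modn_small //; lia.
by right; split => //; rewrite modn_small //; lia.
Qed.

Section Quot.
Variable D : bool -> nat -> nat.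
Variable t0 : bool.
Hypothesis H1 : forall s m, D s m <= D s (m + dd s) + 1 /\ D s (m + dd s) <= D s m + 1.
Hypothesis H2 : forall m, D false m <= D true m + 1 /\ D true m <= D false m + 1.
Hypothesis H3 : forall s j, j <= dd s -> D s j <= D s (dd s - j) + 1.
Hypothesis H4 : forall s m, m %/ 3 <= D s m /\ D s m <= m %/ 3 + 4.
Hypothesis H5 : forall s m, 0 < D s m ->
  (dd s <= m /\ D s (m - dd s) < D s m) \/ (m < dd s /\ D s (dd s - m) < D s m)
  \/ D (~~ s) m < D s m.
Hypothesis H0 : forall s m, D s m = 0 -> s = t0 /\ m = 0.
Variable n : nat.
Hypothesis n17 : 16 < n.

Lemma NLip1 s m : m < n ->
  Hd D n s m <= Hd D n s ((m + dd s) %% n) + 1 /\ Hd D n s ((m + dd s) %% n) <= Hd D n s m + 1.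
Proof.
move=> mn.
have dd3 : 1 <= dd s <= 3 by rewrite /dd; case: s.
have ddn : dd s <= n by lia.
rewrite /Hd.
case: (modcase mn ddn) => [[h ->]|[h ->]].
  have := H1 s m; have := H1 s (n - m - dd s).
  have -> : n - m - dd s + dd s = n - m by lia.
  have -> : n - (m + dd s) = n - m - dd s by lia.
  lia.
have hj : n - m <= dd s by lia.
have := @H3 s _ hj.
have := @H3 s _ (leq_subr (n - m) (dd s)).
have -> : dd s - (dd s - (n - m)) = n - m by lia.
have -> : m + dd s - n = dd s - (n - m) by lia.
have -> : n - (dd s - (n - m)) = n - dd s + (n - m) by lia.
have := H4 s (n - dd s + (n - m)); have := H4 s m; have := H4 s (n - m); have := H4 s (dd s - (n - m)).
lia.
Qed.

Lemma NLip2 m : Hd D n false m <= Hd D n true m + 1 /\ Hd D n true m <= Hd D n false m + 1.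
Proof. rewrite /Hd; have := H2 m; have := H2 (n - m); lia. Qed.

Lemma NZero s m : m < n -> Hd D n s m = 0 -> s = t0 /\ m = 0.
Proof.
move=> mn; rewrite /Hd => hz.
case: (leqP (D s m) (D s (n - m))) => hle.
  by apply: H0; lia.
have [_ ] := H0 (s := s) (m := n - m) ltac:(lia); lia.
Qed.

Lemma NDesc s m : m < n -> 0 < Hd D n s m ->
  Hd D n s ((m + dd s) %% n) < Hd D n s m \/ Hd D n s ((m + n - dd s) %% n) < Hd D n s m
  \/ Hd D n (~~ s) m < Hd D n s m.
Proof.
move=> mn.
have dd3 : 1 <= dd s <= 3 by rewrite /dd; case: s.
have ddn : dd s <= n by lia.
rewrite /Hd => hpos.
have sw : D (~~ s) m <= D (~~ s) (n - m) \/ D (~~ s) (n - m) < D (~~ s) m by lia.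
case: (leqP (D s m) (D s (n - m))) => hle.
  have := @H5 s m ltac:(lia).
  case: (modcase2 mn ddn) => [[h1 ->]|[h1 ->]]; case: (modcase mn ddn) => [[h2 ->]|[h2 ->]].
  - lia.
  - lia.
  - rewrite (_ : n - (m + n - dd s) = dd s - m); last lia. lia.
  - rewrite (_ : n - (m + n - dd s) = dd s - m); last lia. lia.
have := @H5 s (n - m) ltac:(lia).
have := H4 s m; have := H4 s (n - m).
case: (modcase2 mn ddn) => [[h1 ->]|[h1 ->]]; case: (modcase mn ddn) => [[h2 ->]|[h2 ->]].
- rewrite (_ : n - (m + dd s) = n - m - dd s); last lia. lia.
- rewrite (_ : m + dd s - n = dd s - (n - m)); last lia.
  case: (ltngtP (n - m) (dd s)) => hj; try lia.
  rewrite hj subnn. lia.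
- rewrite (_ : n - (m + dd s) = n - m - dd s); last lia. lia.
- rewrite (_ : m + dd s - n = dd s - (n - m)); last lia. lia.
Qed.
End Quot.

Lemma Du1 s m : Du s m <= Du s (m + dd s) + 1 /\ Du s (m + dd s) <= Du s m + 1.
Proof. case: s; rewrite /Du /dd; lia. Qed.
Lemma Dv1 s m : Dv s m <= Dv s (m + dd s) + 1 /\ Dv s (m + dd s) <= Dv s m + 1.
Proof. case: s; rewrite /Dv /dd; lia. Qed.
Lemma Du2 m : Du false m <= Du true m + 1 /\ Du true m <= Du false m + 1.
Proof. rewrite /Du; lia. Qed.
Lemma Dv2 m : Dv false m <= Dv true m + 1 /\ Dv true m <= Dv false m + 1.
Proof. rewrite /Dv; lia. Qed.
Lemma Du3 s j : j <= dd s -> Du s j <= Du s (dd s - j) + 1.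
Proof. case: s; rewrite /dd => h; [case: j h => [|[|[|[|j]]]] //| case: j h => [|[|j]] //]. Qed.
Lemma Dv3 s j : j <= dd s -> Dv s j <= Dv s (dd s - j) + 1.
Proof. case: s; rewrite /dd => h; [case: j h => [|[|[|[|j]]]] //| case: j h => [|[|j]] //]. Qed.
Lemma Du4 s m : m %/ 3 <= Du s m /\ Du s m <= m %/ 3 + 4.
Proof. case: s; rewrite /Du; lia. Qed.
Lemma Dv4 s m : m %/ 3 <= Dv s m /\ Dv s m <= m %/ 3 + 4.
Proof. case: s; rewrite /Dv; lia. Qed.
Lemma Du5 s m : 0 < Du s m ->
  (dd s <= m /\ Du s (m - dd s) < Du s m) \/ (m < dd s /\ Du s (dd s - m) < Du s m)
  \/ Du (~~ s) m < Du s m.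
Proof. case: s; rewrite /Du /dd /=; lia. Qed.
Lemma Dv5 s m : 0 < Dv s m ->
  (dd s <= m /\ Dv s (m - dd s) < Dv s m) \/ (m < dd s /\ Dv s (dd s - m) < Dv s m)
  \/ Dv (~~ s) m < Dv s m.
Proof. case: s; rewrite /Dv /dd /=; lia. Qed.
Lemma Du0 s m : Du s m = 0 -> s = false /\ m = 0.
Proof. case: s; rewrite /Du; lia. Qed.
Lemma Dv0 s m : Dv s m = 0 -> s = true /\ m = 0.
Proof. case: s; rewrite /Dv; lia. Qed.
Lemma Dumono s m m' : m + 8 <= m' -> Du s m <= Du s m'.
Proof. case: s; rewrite /Du; lia. Qed.
Lemma Dvmono s m m' : m + 8 <= m' -> Dv s m <= Dv s m'.
Proof. case: s; rewrite /Dv; lia. Qed.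

Definition Lg (i : nat) := 2 * ((i - 5) %/ 3) + 2 + minn ((i - 5) %% 3) (2 - (i - 5) %% 3).
Definition Lf (i : nat) : nat :=
  if i < 5 then (if i == 0 then 2 else if i == 2 then 1 else if i == 3 then 1 else 0) else Lg i.
Definition pN h r := if r == 1 then 3*h-1 else if r == 2 then 3*h else 3*h+2.
Definition qN h r := if r == 0 then 3*h else if r == 1 then 3*h+2 else if r == 3 then 3*h+3 else 3*h+5.
Definition Sn2 h r := if r == 0 then 2*h-3 else if r == 3 then 2*h-2 else if r == 5 then 2*h+2 else 2*h.
Definition Rg j := if j == 0 then 0 else if j == 1 then 2 else 1 + (j - 2) %% 3.
Definition Mid h r i :=
  if (r == 1) || (r == 4) then Lf i + 1 else
  if r == 2 then (if i == 3*h+3 then Lf i - 1 else if i == 3*h+4 then Lf i + 2 else Lf i + 1) else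
  if r == 5 then (if i == 3*h+3 then Lf i - 1 else Lf i + 2) else Lf i.
Definition Sh h r i :=
  if i <= pN h r then Lf i else if qN h r <= i then Sn2 h r + Rg (6*h + r - i) else Mid h r i.

Ltac shsolve := rewrite /Sh /pN /qN /Sn2 /Mid /Rg /Lf /Lg /=; repeat (case: ifP => ?); lia.

Lemma LfE i : 5 <= i -> Lf i = Lg i.
Proof. by rewrite /Lf => h; rewrite ifF //; apply/negbTE; rewrite -leqNgt. Qed.

Lemma leftL i : 0 < i ->
  (Du false i < Dv false (i-1)) + (Du true i < Dv true (i-1)) + Lf i.+1
  = (Dv false (i-1) < Du false i) + (Dv true (i-1) < Du true i) + Lf i.
Proof.
move=> i0; case: (ltnP i 5) => hi.
  { have : i = 1 \/ i = 2 \/ i = 3 \/ i = 4 by lia.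
    by case=> [->|[->|[->|->]]]. }
have : (i - 5) %% 3 = 0 \/ (i - 5) %% 3 = 1 \/ (i - 5) %% 3 = 2 by lia.
have : i = 3 * ((i - 5) %/ 3) + 5 + (i - 5) %% 3 by lia.
move: ((i - 5) %/ 3) ((i - 5) %% 3) => k t E.
rewrite LfE ?LfE; try lia.
case=> [T|[T|T]]; subst t.
- have e0 : Du false i = 1*k + 5 by rewrite /Du /Dv /Lg; lia. have e1 : Du true i = 1*k + 4 by rewrite /Du /Dv /Lg; lia. have e2 : Dv false (i-1) = 1*k + 3 by rewrite /Du /Dv /Lg; lia. have e3 : Dv true (i-1) = 1*k + 4 by rewrite /Du /Dv /Lg; lia. have e4 : Lg i.+1 = 2*k + 3 by rewrite /Du /Dv /Lg; lia. have e5 : Lg i = 2*k + 2 by rewrite /Du /Dv /Lg; lia.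
  rewrite e0 e1 e2 e3 e4 e5; lia.
- have e0 : Du false i = 1*k + 4 by rewrite /Du /Dv /Lg; lia. have e1 : Du true i = 1*k + 3 by rewrite /Du /Dv /Lg; lia. have e2 : Dv false (i-1) = 1*k + 4 by rewrite /Du /Dv /Lg; lia. have e3 : Dv true (i-1) = 1*k + 5 by rewrite /Du /Dv /Lg; lia. have e4 : Lg i.+1 = 2*k + 2 by rewrite /Du /Dv /Lg; lia. have e5 : Lg i = 2*k + 3 by rewrite /Du /Dv /Lg; lia.
  rewrite e0 e1 e2 e3 e4 e5; lia.
- have e0 : Du false i = 1*k + 5 by rewrite /Du /Dv /Lg; lia. have e1 : Du true i = 1*k + 4 by rewrite /Du /Dv /Lg; lia. have e2 : Dv false (i-1) = 1*k + 3 by rewrite /Du /Dv /Lg; lia. have e3 : Dv true (i-1) = 1*k + 2 by rewrite /Du /Dv /Lg; lia. have e4 : Lg i.+1 = 2*k + 4 by rewrite /Du /Dv /Lg; lia. have e5 : Lg i = 2*k + 2 by rewrite /Du /Dv /Lg; lia.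
  rewrite e0 e1 e2 e3 e4 e5; lia.
Qed.

Lemma rightL j : 0 < j ->
  (Du false j < Dv false j.+1) + (Du true j < Dv true j.+1) + Rg (j-1)
  = (Dv false j.+1 < Du false j) + (Dv true j.+1 < Du true j) + Rg j.
Proof.
move=> j0; case: (ltnP j 5) => hj.
  { have : j = 1 \/ j = 2 \/ j = 3 \/ j = 4 by lia.
    by case=> [->|[->|[->|->]]]. }
have : (j - 5) %% 3 = 0 \/ (j - 5) %% 3 = 1 \/ (j - 5) %% 3 = 2 by lia.
have : j = 3 * ((j - 5) %/ 3) + 5 + (j - 5) %% 3 by lia.
move: ((j - 5) %/ 3) ((j - 5) %% 3) => k t E.
case=> [T|[T|T]]; subst t.
- have e0 : Du false j = 1*k + 5 by rewrite /Du /Dv /Rg; repeat (case: ifP => ?); lia. have e1 : Du true j = 1*k + 4 by rewrite /Du /Dv /Rg; repeat (case: ifP => ?); lia. have e2 : Dv false j.+1 = 1*k + 3 by rewrite /Du /Dv /Rg; repeat (case: ifP => ?); lia. have e3 : Dv true j.+1 = 1*k + 2 by rewrite /Du /Dv /Rg; repeat (case: ifP => ?); lia. have e4 : Rg (j-1) = 3 by rewrite /Du /Dv /Rg; repeat (case: ifP => ?); lia. have e5 : Rg j = 1 by rewrite /Du /Dv /Rg; repeat (case: ifP => ?); lia.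
  rewrite e0 e1 e2 e3 e4 e5; lia.
- have e0 : Du false j = 1*k + 4 by rewrite /Du /Dv /Rg; repeat (case: ifP => ?); lia. have e1 : Du true j = 1*k + 3 by rewrite /Du /Dv /Rg; repeat (case: ifP => ?); lia. have e2 : Dv false j.+1 = 1*k + 4 by rewrite /Du /Dv /Rg; repeat (case: ifP => ?); lia. have e3 : Dv true j.+1 = 1*k + 5 by rewrite /Du /Dv /Rg; repeat (case: ifP => ?); lia. have e4 : Rg (j-1) = 1 by rewrite /Du /Dv /Rg; repeat (case: ifP => ?); lia. have e5 : Rg j = 2 by rewrite /Du /Dv /Rg; repeat (case: ifP => ?); lia.
  rewrite e0 e1 e2 e3 e4 e5; lia.
- have e0 : Du false j = 1*k + 5 by rewrite /Du /Dv /Rg; repeat (case: ifP => ?); lia. have e1 : Du true j = 1*k + 4 by rewrite /Du /Dv /Rg; repeat (case: ifP => ?); lia. have e2 : Dv false j.+1 = 1*k + 5 by rewrite /Du /Dv /Rg; repeat (case: ifP => ?); lia. have e3 : Dv true j.+1 = 1*k + 6 by rewrite /Du /Dv /Rg; repeat (case: ifP => ?); lia. have e4 : Rg (j-1) = 2 by rewrite /Du /Dv /Rg; repeat (case: ifP => ?); lia. have e5 : Rg j = 3 by rewrite /Du /Dv /Rg; repeat (case: ifP => ?); lia.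
  rewrite e0 e1 e2 e3 e4 e5; lia.
Qed.

Lemma mid_0_7 h i : 3 <= h -> i = 3*h - 3 ->
  (Hd Du (6*h+0) false i < Hd Dv (6*h+0) false (i-1)) + (Hd Du (6*h+0) true i < Hd Dv (6*h+0) true (i-1)) + Sh h 0 i.+1
  = (Hd Dv (6*h+0) false (i-1) < Hd Du (6*h+0) false i) + (Hd Dv (6*h+0) true (i-1) < Hd Du (6*h+0) true i) + Sh h 0 i.
Proof.
move=> hh E.
have e0 : Hd Du (6*h+0) false i = 1*h + 1 by rewrite /Hd /Du /Dv; lia.
have e1 : Hd Du (6*h+0) true i = 1*h by rewrite /Hd /Du /Dv; lia.
have e2 : Hd Dv (6*h+0) false (i-1) = 1*h + 1 by rewrite /Hd /Du /Dv; lia.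
have e3 : Hd Dv (6*h+0) true (i-1) = 1*h + 2 by rewrite /Hd /Du /Dv; lia.
have e4 : Sh h 0 i.+1 = 2*h - 4 by shsolve.
have e5 : Sh h 0 i = 2*h - 3 by shsolve.
rewrite e0 e1 e2 e3 e4 e5; lia.
Qed.

Lemma mid_0_8 h i : 3 <= h -> i = 3*h - 2 ->
  (Hd Du (6*h+0) false i < Hd Dv (6*h+0) false (i-1)) + (Hd Du (6*h+0) true i < Hd Dv (6*h+0) true (i-1)) + Sh h 0 i.+1
  = (Hd Dv (6*h+0) false (i-1) < Hd Du (6*h+0) false i) + (Hd Dv (6*h+0) true (i-1) < Hd Du (6*h+0) true i) + Sh h 0 i.
Proof.
move=> hh E.
have e0 : Hd Du (6*h+0) false i = 1*h + 2 by rewrite /Hd /Du /Dv; lia.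
have e1 : Hd Du (6*h+0) true i = 1*h + 1 by rewrite /Hd /Du /Dv; lia.
have e2 : Hd Dv (6*h+0) false (i-1) = 1*h by rewrite /Hd /Du /Dv; lia.
have e3 : Hd Dv (6*h+0) true (i-1) = 1*h - 1 by rewrite /Hd /Du /Dv; lia.
have e4 : Sh h 0 i.+1 = 2*h - 2 by shsolve.
have e5 : Sh h 0 i = 2*h - 4 by shsolve.
rewrite e0 e1 e2 e3 e4 e5; lia.
Qed.

Lemma mid_0_9 h i : 3 <= h -> i = 3*h - 1 ->
  (Hd Du (6*h+0) false i < Hd Dv (6*h+0) false (i-1)) + (Hd Du (6*h+0) true i < Hd Dv (6*h+0) true (i-1)) + Sh h 0 i.+1
  = (Hd Dv (6*h+0) false (i-1) < Hd Du (6*h+0) false i) + (Hd Dv (6*h+0) true (i-1) < Hd Du (6*h+0) true i) + Sh h 0 i.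
Proof.
move=> hh E.
have e0 : Hd Du (6*h+0) false i = 1*h + 3 by rewrite /Hd /Du /Dv; lia.
have e1 : Hd Du (6*h+0) true i = 1*h + 2 by rewrite /Hd /Du /Dv; lia.
have e2 : Hd Dv (6*h+0) false (i-1) = 1*h + 1 by rewrite /Hd /Du /Dv; lia.
have e3 : Hd Dv (6*h+0) true (i-1) = 1*h + 2 by rewrite /Hd /Du /Dv; lia.
have e4 : Sh h 0 i.+1 = 2*h - 1 by shsolve.
have e5 : Sh h 0 i = 2*h - 2 by shsolve.
rewrite e0 e1 e2 e3 e4 e5; lia.
Qed.

Lemma mid_0_10 h i : 3 <= h -> i = 3*h + 0 ->
  (Hd Du (6*h+0) false i < Hd Dv (6*h+0) false (i-1)) + (Hd Du (6*h+0) true i < Hd Dv (6*h+0) true (i-1)) + Sh h 0 i.+1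
  = (Hd Dv (6*h+0) false (i-1) < Hd Du (6*h+0) false i) + (Hd Dv (6*h+0) true (i-1) < Hd Du (6*h+0) true i) + Sh h 0 i.
Proof.
move=> hh E.
have e0 : Hd Du (6*h+0) false i = 1*h + 2 by rewrite /Hd /Du /Dv; lia.
have e1 : Hd Du (6*h+0) true i = 1*h + 1 by rewrite /Hd /Du /Dv; lia.
have e2 : Hd Dv (6*h+0) false (i-1) = 1*h + 2 by rewrite /Hd /Du /Dv; lia.
have e3 : Hd Dv (6*h+0) true (i-1) = 1*h + 3 by rewrite /Hd /Du /Dv; lia.
have e4 : Sh h 0 i.+1 = 2*h - 2 by shsolve.
have e5 : Sh h 0 i = 2*h - 1 by shsolve.
rewrite e0 e1 e2 e3 e4 e5; lia.
Qed.

Lemma mid_0_11 h i : 3 <= h -> i = 3*h + 1 ->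
  (Hd Du (6*h+0) false i < Hd Dv (6*h+0) false (i-1)) + (Hd Du (6*h+0) true i < Hd Dv (6*h+0) true (i-1)) + Sh h 0 i.+1
  = (Hd Dv (6*h+0) false (i-1) < Hd Du (6*h+0) false i) + (Hd Dv (6*h+0) true (i-1) < Hd Du (6*h+0) true i) + Sh h 0 i.
Proof.
move=> hh E.
have e0 : Hd Du (6*h+0) false i = 1*h + 3 by rewrite /Hd /Du /Dv; lia.
have e1 : Hd Du (6*h+0) true i = 1*h + 2 by rewrite /Hd /Du /Dv; lia.
have e2 : Hd Dv (6*h+0) false (i-1) = 1*h + 1 by rewrite /Hd /Du /Dv; lia.
have e3 : Hd Dv (6*h+0) true (i-1) = 1*h by rewrite /Hd /Du /Dv; lia.
have e4 : Sh h 0 i.+1 = 2*h by shsolve.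
have e5 : Sh h 0 i = 2*h - 2 by shsolve.
rewrite e0 e1 e2 e3 e4 e5; lia.
Qed.

Lemma mid_0_12 h i : 3 <= h -> i = 3*h + 2 ->
  (Hd Du (6*h+0) false i < Hd Dv (6*h+0) false (i-1)) + (Hd Du (6*h+0) true i < Hd Dv (6*h+0) true (i-1)) + Sh h 0 i.+1
  = (Hd Dv (6*h+0) false (i-1) < Hd Du (6*h+0) false i) + (Hd Dv (6*h+0) true (i-1) < Hd Du (6*h+0) true i) + Sh h 0 i.
Proof.
move=> hh E.
have e0 : Hd Du (6*h+0) false i = 1*h + 2 by rewrite /Hd /Du /Dv; lia.
have e1 : Hd Du (6*h+0) true i = 1*h + 1 by rewrite /Hd /Du /Dv; lia.
have e2 : Hd Dv (6*h+0) false (i-1) = 1*h + 2 by rewrite /Hd /Du /Dv; lia.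
have e3 : Hd Dv (6*h+0) true (i-1) = 1*h + 3 by rewrite /Hd /Du /Dv; lia.
have e4 : Sh h 0 i.+1 = 2*h - 1 by shsolve.
have e5 : Sh h 0 i = 2*h by shsolve.
rewrite e0 e1 e2 e3 e4 e5; lia.
Qed.

Lemma mid_0_13 h i : 3 <= h -> i = 3*h + 3 ->
  (Hd Du (6*h+0) false i < Hd Dv (6*h+0) false (i-1)) + (Hd Du (6*h+0) true i < Hd Dv (6*h+0) true (i-1)) + Sh h 0 i.+1
  = (Hd Dv (6*h+0) false (i-1) < Hd Du (6*h+0) false i) + (Hd Dv (6*h+0) true (i-1) < Hd Du (6*h+0) true i) + Sh h 0 i.
Proof.
move=> hh E.
have e0 : Hd Du (6*h+0) false i = 1*h + 1 by rewrite /Hd /Du /Dv; lia.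
have e1 : Hd Du (6*h+0) true i = 1*h by rewrite /Hd /Du /Dv; lia.
have e2 : Hd Dv (6*h+0) false (i-1) = 1*h + 1 by rewrite /Hd /Du /Dv; lia.
have e3 : Hd Dv (6*h+0) true (i-1) = 1*h + 2 by rewrite /Hd /Du /Dv; lia.
have e4 : Sh h 0 i.+1 = 2*h - 2 by shsolve.
have e5 : Sh h 0 i = 2*h - 1 by shsolve.
rewrite e0 e1 e2 e3 e4 e5; lia.
Qed.

Lemma mid_0_14 h i : 3 <= h -> i = 3*h + 4 ->
  (Hd Du (6*h+0) false i < Hd Dv (6*h+0) false (i-1)) + (Hd Du (6*h+0) true i < Hd Dv (6*h+0) true (i-1)) + Sh h 0 i.+1
  = (Hd Dv (6*h+0) false (i-1) < Hd Du (6*h+0) false i) + (Hd Dv (6*h+0) true (i-1) < Hd Du (6*h+0) true i) + Sh h 0 i.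
Proof.
move=> hh E.
have e0 : Hd Du (6*h+0) false i = 1*h + 2 by rewrite /Hd /Du /Dv; lia.
have e1 : Hd Du (6*h+0) true i = 1*h + 1 by rewrite /Hd /Du /Dv; lia.
have e2 : Hd Dv (6*h+0) false (i-1) = 1*h by rewrite /Hd /Du /Dv; lia.
have e3 : Hd Dv (6*h+0) true (i-1) = 1*h - 1 by rewrite /Hd /Du /Dv; lia.
have e4 : Sh h 0 i.+1 = 2*h by shsolve.
have e5 : Sh h 0 i = 2*h - 2 by shsolve.
rewrite e0 e1 e2 e3 e4 e5; lia.
Qed.

Lemma mid_1_7 h i : 3 <= h -> i = 3*h - 3 ->
  (Hd Du (6*h+1) false i < Hd Dv (6*h+1) false (i-1)) + (Hd Du (6*h+1) true i < Hd Dv (6*h+1) true (i-1)) + Sh h 1 i.+1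
  = (Hd Dv (6*h+1) false (i-1) < Hd Du (6*h+1) false i) + (Hd Dv (6*h+1) true (i-1) < Hd Du (6*h+1) true i) + Sh h 1 i.
Proof.
move=> hh E.
have e0 : Hd Du (6*h+1) false i = 1*h + 1 by rewrite /Hd /Du /Dv; lia.
have e1 : Hd Du (6*h+1) true i = 1*h by rewrite /Hd /Du /Dv; lia.
have e2 : Hd Dv (6*h+1) false (i-1) = 1*h + 1 by rewrite /Hd /Du /Dv; lia.
have e3 : Hd Dv (6*h+1) true (i-1) = 1*h + 2 by rewrite /Hd /Du /Dv; lia.
have e4 : Sh h 1 i.+1 = 2*h - 4 by shsolve.
have e5 : Sh h 1 i = 2*h - 3 by shsolve.
rewrite e0 e1 e2 e3 e4 e5; lia.
Qed.

Lemma mid_1_8 h i : 3 <= h -> i = 3*h - 2 ->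
  (Hd Du (6*h+1) false i < Hd Dv (6*h+1) false (i-1)) + (Hd Du (6*h+1) true i < Hd Dv (6*h+1) true (i-1)) + Sh h 1 i.+1
  = (Hd Dv (6*h+1) false (i-1) < Hd Du (6*h+1) false i) + (Hd Dv (6*h+1) true (i-1) < Hd Du (6*h+1) true i) + Sh h 1 i.
Proof.
move=> hh E.
have e0 : Hd Du (6*h+1) false i = 1*h + 2 by rewrite /Hd /Du /Dv; lia.
have e1 : Hd Du (6*h+1) true i = 1*h + 1 by rewrite /Hd /Du /Dv; lia.
have e2 : Hd Dv (6*h+1) false (i-1) = 1*h by rewrite /Hd /Du /Dv; lia.
have e3 : Hd Dv (6*h+1) true (i-1) = 1*h - 1 by rewrite /Hd /Du /Dv; lia.
have e4 : Sh h 1 i.+1 = 2*h - 2 by shsolve.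
have e5 : Sh h 1 i = 2*h - 4 by shsolve.
rewrite e0 e1 e2 e3 e4 e5; lia.
Qed.

Lemma mid_1_9 h i : 3 <= h -> i = 3*h - 1 ->
  (Hd Du (6*h+1) false i < Hd Dv (6*h+1) false (i-1)) + (Hd Du (6*h+1) true i < Hd Dv (6*h+1) true (i-1)) + Sh h 1 i.+1
  = (Hd Dv (6*h+1) false (i-1) < Hd Du (6*h+1) false i) + (Hd Dv (6*h+1) true (i-1) < Hd Du (6*h+1) true i) + Sh h 1 i.
Proof.
move=> hh E.
have e0 : Hd Du (6*h+1) false i = 1*h + 3 by rewrite /Hd /Du /Dv; lia.
have e1 : Hd Du (6*h+1) true i = 1*h + 2 by rewrite /Hd /Du /Dv; lia.
have e2 : Hd Dv (6*h+1) false (i-1) = 1*h + 1 by rewrite /Hd /Du /Dv; lia.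
have e3 : Hd Dv (6*h+1) true (i-1) = 1*h + 1 by rewrite /Hd /Du /Dv; lia.
have e4 : Sh h 1 i.+1 = 2*h by shsolve.
have e5 : Sh h 1 i = 2*h - 2 by shsolve.
rewrite e0 e1 e2 e3 e4 e5; lia.
Qed.

Lemma mid_1_10 h i : 3 <= h -> i = 3*h + 0 ->
  (Hd Du (6*h+1) false i < Hd Dv (6*h+1) false (i-1)) + (Hd Du (6*h+1) true i < Hd Dv (6*h+1) true (i-1)) + Sh h 1 i.+1
  = (Hd Dv (6*h+1) false (i-1) < Hd Du (6*h+1) false i) + (Hd Dv (6*h+1) true (i-1) < Hd Du (6*h+1) true i) + Sh h 1 i.
Proof.
move=> hh E.
have e0 : Hd Du (6*h+1) false i = 1*h + 2 by rewrite /Hd /Du /Dv; lia.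
have e1 : Hd Du (6*h+1) true i = 1*h + 1 by rewrite /Hd /Du /Dv; lia.
have e2 : Hd Dv (6*h+1) false (i-1) = 1*h + 2 by rewrite /Hd /Du /Dv; lia.
have e3 : Hd Dv (6*h+1) true (i-1) = 1*h + 3 by rewrite /Hd /Du /Dv; lia.
have e4 : Sh h 1 i.+1 = 2*h - 1 by shsolve.
have e5 : Sh h 1 i = 2*h by shsolve.
rewrite e0 e1 e2 e3 e4 e5; lia.
Qed.

Lemma mid_1_11 h i : 3 <= h -> i = 3*h + 1 ->
  (Hd Du (6*h+1) false i < Hd Dv (6*h+1) false (i-1)) + (Hd Du (6*h+1) true i < Hd Dv (6*h+1) true (i-1)) + Sh h 1 i.+1
  = (Hd Dv (6*h+1) false (i-1) < Hd Du (6*h+1) false i) + (Hd Dv (6*h+1) true (i-1) < Hd Du (6*h+1) true i) + Sh h 1 i.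
Proof.
move=> hh E.
have e0 : Hd Du (6*h+1) false i = 1*h + 2 by rewrite /Hd /Du /Dv; lia.
have e1 : Hd Du (6*h+1) true i = 1*h + 1 by rewrite /Hd /Du /Dv; lia.
have e2 : Hd Dv (6*h+1) false (i-1) = 1*h + 1 by rewrite /Hd /Du /Dv; lia.
have e3 : Hd Dv (6*h+1) true (i-1) = 1*h by rewrite /Hd /Du /Dv; lia.
have e4 : Sh h 1 i.+1 = 2*h + 1 by shsolve.
have e5 : Sh h 1 i = 2*h - 1 by shsolve.
rewrite e0 e1 e2 e3 e4 e5; lia.
Qed.

Lemma mid_1_12 h i : 3 <= h -> i = 3*h + 2 ->
  (Hd Du (6*h+1) false i < Hd Dv (6*h+1) false (i-1)) + (Hd Du (6*h+1) true i < Hd Dv (6*h+1) true (i-1)) + Sh h 1 i.+1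
  = (Hd Dv (6*h+1) false (i-1) < Hd Du (6*h+1) false i) + (Hd Dv (6*h+1) true (i-1) < Hd Du (6*h+1) true i) + Sh h 1 i.
Proof.
move=> hh E.
have e0 : Hd Du (6*h+1) false i = 1*h + 3 by rewrite /Hd /Du /Dv; lia.
have e1 : Hd Du (6*h+1) true i = 1*h + 2 by rewrite /Hd /Du /Dv; lia.
have e2 : Hd Dv (6*h+1) false (i-1) = 1*h + 1 by rewrite /Hd /Du /Dv; lia.
have e3 : Hd Dv (6*h+1) true (i-1) = 1*h by rewrite /Hd /Du /Dv; lia.
have e4 : Sh h 1 i.+1 = 2*h + 3 by shsolve.
have e5 : Sh h 1 i = 2*h + 1 by shsolve.
rewrite e0 e1 e2 e3 e4 e5; lia.
Qed.

Lemma mid_1_13 h i : 3 <= h -> i = 3*h + 3 ->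
  (Hd Du (6*h+1) false i < Hd Dv (6*h+1) false (i-1)) + (Hd Du (6*h+1) true i < Hd Dv (6*h+1) true (i-1)) + Sh h 1 i.+1
  = (Hd Dv (6*h+1) false (i-1) < Hd Du (6*h+1) false i) + (Hd Dv (6*h+1) true (i-1) < Hd Du (6*h+1) true i) + Sh h 1 i.
Proof.
move=> hh E.
have e0 : Hd Du (6*h+1) false i = 1*h + 2 by rewrite /Hd /Du /Dv; lia.
have e1 : Hd Du (6*h+1) true i = 1*h + 1 by rewrite /Hd /Du /Dv; lia.
have e2 : Hd Dv (6*h+1) false (i-1) = 1*h + 2 by rewrite /Hd /Du /Dv; lia.
have e3 : Hd Dv (6*h+1) true (i-1) = 1*h + 3 by rewrite /Hd /Du /Dv; lia.
have e4 : Sh h 1 i.+1 = 2*h + 2 by shsolve.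
have e5 : Sh h 1 i = 2*h + 3 by shsolve.
rewrite e0 e1 e2 e3 e4 e5; lia.
Qed.

Lemma mid_1_14 h i : 3 <= h -> i = 3*h + 4 ->
  (Hd Du (6*h+1) false i < Hd Dv (6*h+1) false (i-1)) + (Hd Du (6*h+1) true i < Hd Dv (6*h+1) true (i-1)) + Sh h 1 i.+1
  = (Hd Dv (6*h+1) false (i-1) < Hd Du (6*h+1) false i) + (Hd Dv (6*h+1) true (i-1) < Hd Du (6*h+1) true i) + Sh h 1 i.
Proof.
move=> hh E.
have e0 : Hd Du (6*h+1) false i = 1*h + 1 by rewrite /Hd /Du /Dv; lia.
have e1 : Hd Du (6*h+1) true i = 1*h by rewrite /Hd /Du /Dv; lia.
have e2 : Hd Dv (6*h+1) false (i-1) = 1*h + 1 by rewrite /Hd /Du /Dv; lia.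
have e3 : Hd Dv (6*h+1) true (i-1) = 1*h + 1 by rewrite /Hd /Du /Dv; lia.
have e4 : Sh h 1 i.+1 = 2*h + 1 by shsolve.
have e5 : Sh h 1 i = 2*h + 2 by shsolve.
rewrite e0 e1 e2 e3 e4 e5; lia.
Qed.

Lemma mid_1_15 h i : 3 <= h -> i = 3*h + 5 ->
  (Hd Du (6*h+1) false i < Hd Dv (6*h+1) false (i-1)) + (Hd Du (6*h+1) true i < Hd Dv (6*h+1) true (i-1)) + Sh h 1 i.+1
  = (Hd Dv (6*h+1) false (i-1) < Hd Du (6*h+1) false i) + (Hd Dv (6*h+1) true (i-1) < Hd Du (6*h+1) true i) + Sh h 1 i.
Proof.
move=> hh E.
have e0 : Hd Du (6*h+1) false i = 1*h + 2 by rewrite /Hd /Du /Dv; lia.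
have e1 : Hd Du (6*h+1) true i = 1*h + 1 by rewrite /Hd /Du /Dv; lia.
have e2 : Hd Dv (6*h+1) false (i-1) = 1*h by rewrite /Hd /Du /Dv; lia.
have e3 : Hd Dv (6*h+1) true (i-1) = 1*h - 1 by rewrite /Hd /Du /Dv; lia.
have e4 : Sh h 1 i.+1 = 2*h + 3 by shsolve.
have e5 : Sh h 1 i = 2*h + 1 by shsolve.
rewrite e0 e1 e2 e3 e4 e5; lia.
Qed.

Lemma mid_2_8 h i : 3 <= h -> i = 3*h - 2 ->
  (Hd Du (6*h+2) false i < Hd Dv (6*h+2) false (i-1)) + (Hd Du (6*h+2) true i < Hd Dv (6*h+2) true (i-1)) + Sh h 2 i.+1
  = (Hd Dv (6*h+2) false (i-1) < Hd Du (6*h+2) false i) + (Hd Dv (6*h+2) true (i-1) < Hd Du (6*h+2) true i) + Sh h 2 i.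
Proof.
move=> hh E.
have e0 : Hd Du (6*h+2) false i = 1*h + 2 by rewrite /Hd /Du /Dv; lia.
have e1 : Hd Du (6*h+2) true i = 1*h + 1 by rewrite /Hd /Du /Dv; lia.
have e2 : Hd Dv (6*h+2) false (i-1) = 1*h by rewrite /Hd /Du /Dv; lia.
have e3 : Hd Dv (6*h+2) true (i-1) = 1*h - 1 by rewrite /Hd /Du /Dv; lia.
have e4 : Sh h 2 i.+1 = 2*h - 2 by shsolve.
have e5 : Sh h 2 i = 2*h - 4 by shsolve.
rewrite e0 e1 e2 e3 e4 e5; lia.
Qed.

Lemma mid_2_9 h i : 3 <= h -> i = 3*h - 1 ->
  (Hd Du (6*h+2) false i < Hd Dv (6*h+2) false (i-1)) + (Hd Du (6*h+2) true i < Hd Dv (6*h+2) true (i-1)) + Sh h 2 i.+1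
  = (Hd Dv (6*h+2) false (i-1) < Hd Du (6*h+2) false i) + (Hd Dv (6*h+2) true (i-1) < Hd Du (6*h+2) true i) + Sh h 2 i.
Proof.
move=> hh E.
have e0 : Hd Du (6*h+2) false i = 1*h + 3 by rewrite /Hd /Du /Dv; lia.
have e1 : Hd Du (6*h+2) true i = 1*h + 2 by rewrite /Hd /Du /Dv; lia.
have e2 : Hd Dv (6*h+2) false (i-1) = 1*h + 1 by rewrite /Hd /Du /Dv; lia.
have e3 : Hd Dv (6*h+2) true (i-1) = 1*h + 2 by rewrite /Hd /Du /Dv; lia.
have e4 : Sh h 2 i.+1 = 2*h - 1 by shsolve.
have e5 : Sh h 2 i = 2*h - 2 by shsolve.
rewrite e0 e1 e2 e3 e4 e5; lia.
Qed.

Lemma mid_2_10 h i : 3 <= h -> i = 3*h + 0 ->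
  (Hd Du (6*h+2) false i < Hd Dv (6*h+2) false (i-1)) + (Hd Du (6*h+2) true i < Hd Dv (6*h+2) true (i-1)) + Sh h 2 i.+1
  = (Hd Dv (6*h+2) false (i-1) < Hd Du (6*h+2) false i) + (Hd Dv (6*h+2) true (i-1) < Hd Du (6*h+2) true i) + Sh h 2 i.
Proof.
move=> hh E.
have e0 : Hd Du (6*h+2) false i = 1*h + 2 by rewrite /Hd /Du /Dv; lia.
have e1 : Hd Du (6*h+2) true i = 1*h + 1 by rewrite /Hd /Du /Dv; lia.
have e2 : Hd Dv (6*h+2) false (i-1) = 1*h + 2 by rewrite /Hd /Du /Dv; lia.
have e3 : Hd Dv (6*h+2) true (i-1) = 1*h + 1 by rewrite /Hd /Du /Dv; lia.
have e4 : Sh h 2 i.+1 = 2*h - 1 by shsolve.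
have e5 : Sh h 2 i = 2*h - 1 by shsolve.
rewrite e0 e1 e2 e3 e4 e5; lia.
Qed.

Lemma mid_2_11 h i : 3 <= h -> i = 3*h + 1 ->
  (Hd Du (6*h+2) false i < Hd Dv (6*h+2) false (i-1)) + (Hd Du (6*h+2) true i < Hd Dv (6*h+2) true (i-1)) + Sh h 2 i.+1
  = (Hd Dv (6*h+2) false (i-1) < Hd Du (6*h+2) false i) + (Hd Dv (6*h+2) true (i-1) < Hd Du (6*h+2) true i) + Sh h 2 i.
Proof.
move=> hh E.
have e0 : Hd Du (6*h+2) false i = 1*h + 3 by rewrite /Hd /Du /Dv; lia.
have e1 : Hd Du (6*h+2) true i = 1*h + 2 by rewrite /Hd /Du /Dv; lia.
have e2 : Hd Dv (6*h+2) false (i-1) = 1*h + 1 by rewrite /Hd /Du /Dv; lia.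
have e3 : Hd Dv (6*h+2) true (i-1) = 1*h by rewrite /Hd /Du /Dv; lia.
have e4 : Sh h 2 i.+1 = 2*h + 1 by shsolve.
have e5 : Sh h 2 i = 2*h - 1 by shsolve.
rewrite e0 e1 e2 e3 e4 e5; lia.
Qed.

Lemma mid_2_12 h i : 3 <= h -> i = 3*h + 2 ->
  (Hd Du (6*h+2) false i < Hd Dv (6*h+2) false (i-1)) + (Hd Du (6*h+2) true i < Hd Dv (6*h+2) true (i-1)) + Sh h 2 i.+1
  = (Hd Dv (6*h+2) false (i-1) < Hd Du (6*h+2) false i) + (Hd Dv (6*h+2) true (i-1) < Hd Du (6*h+2) true i) + Sh h 2 i.
Proof.
move=> hh E.
have e0 : Hd Du (6*h+2) false i = 1*h + 2 by rewrite /Hd /Du /Dv; lia.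
have e1 : Hd Du (6*h+2) true i = 1*h + 1 by rewrite /Hd /Du /Dv; lia.
have e2 : Hd Dv (6*h+2) false (i-1) = 1*h + 2 by rewrite /Hd /Du /Dv; lia.
have e3 : Hd Dv (6*h+2) true (i-1) = 1*h + 3 by rewrite /Hd /Du /Dv; lia.
have e4 : Sh h 2 i.+1 = 2*h by shsolve.
have e5 : Sh h 2 i = 2*h + 1 by shsolve.
rewrite e0 e1 e2 e3 e4 e5; lia.
Qed.

Lemma mid_2_13 h i : 3 <= h -> i = 3*h + 3 ->
  (Hd Du (6*h+2) false i < Hd Dv (6*h+2) false (i-1)) + (Hd Du (6*h+2) true i < Hd Dv (6*h+2) true (i-1)) + Sh h 2 i.+1
  = (Hd Dv (6*h+2) false (i-1) < Hd Du (6*h+2) false i) + (Hd Dv (6*h+2) true (i-1) < Hd Du (6*h+2) true i) + Sh h 2 i.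
Proof.
move=> hh E.
have e0 : Hd Du (6*h+2) false i = 1*h + 3 by rewrite /Hd /Du /Dv; lia.
have e1 : Hd Du (6*h+2) true i = 1*h + 2 by rewrite /Hd /Du /Dv; lia.
have e2 : Hd Dv (6*h+2) false (i-1) = 1*h + 1 by rewrite /Hd /Du /Dv; lia.
have e3 : Hd Dv (6*h+2) true (i-1) = 1*h by rewrite /Hd /Du /Dv; lia.
have e4 : Sh h 2 i.+1 = 2*h + 2 by shsolve.
have e5 : Sh h 2 i = 2*h by shsolve.
rewrite e0 e1 e2 e3 e4 e5; lia.
Qed.

Lemma mid_2_14 h i : 3 <= h -> i = 3*h + 4 ->
  (Hd Du (6*h+2) false i < Hd Dv (6*h+2) false (i-1)) + (Hd Du (6*h+2) true i < Hd Dv (6*h+2) true (i-1)) + Sh h 2 i.+1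
  = (Hd Dv (6*h+2) false (i-1) < Hd Du (6*h+2) false i) + (Hd Dv (6*h+2) true (i-1) < Hd Du (6*h+2) true i) + Sh h 2 i.
Proof.
move=> hh E.
have e0 : Hd Du (6*h+2) false i = 1*h + 2 by rewrite /Hd /Du /Dv; lia.
have e1 : Hd Du (6*h+2) true i = 1*h + 1 by rewrite /Hd /Du /Dv; lia.
have e2 : Hd Dv (6*h+2) false (i-1) = 1*h + 2 by rewrite /Hd /Du /Dv; lia.
have e3 : Hd Dv (6*h+2) true (i-1) = 1*h + 1 by rewrite /Hd /Du /Dv; lia.
have e4 : Sh h 2 i.+1 = 2*h + 2 by shsolve.
have e5 : Sh h 2 i = 2*h + 2 by shsolve.
rewrite e0 e1 e2 e3 e4 e5; lia.
Qed.

Lemma mid_2_15 h i : 3 <= h -> i = 3*h + 5 ->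
  (Hd Du (6*h+2) false i < Hd Dv (6*h+2) false (i-1)) + (Hd Du (6*h+2) true i < Hd Dv (6*h+2) true (i-1)) + Sh h 2 i.+1
  = (Hd Dv (6*h+2) false (i-1) < Hd Du (6*h+2) false i) + (Hd Dv (6*h+2) true (i-1) < Hd Du (6*h+2) true i) + Sh h 2 i.
Proof.
move=> hh E.
have e0 : Hd Du (6*h+2) false i = 1*h + 1 by rewrite /Hd /Du /Dv; lia.
have e1 : Hd Du (6*h+2) true i = 1*h by rewrite /Hd /Du /Dv; lia.
have e2 : Hd Dv (6*h+2) false (i-1) = 1*h + 1 by rewrite /Hd /Du /Dv; lia.
have e3 : Hd Dv (6*h+2) true (i-1) = 1*h + 2 by rewrite /Hd /Du /Dv; lia.
have e4 : Sh h 2 i.+1 = 2*h + 1 by shsolve.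
have e5 : Sh h 2 i = 2*h + 2 by shsolve.
rewrite e0 e1 e2 e3 e4 e5; lia.
Qed.

Lemma mid_3_8 h i : 3 <= h -> i = 3*h - 2 ->
  (Hd Du (6*h+3) false i < Hd Dv (6*h+3) false (i-1)) + (Hd Du (6*h+3) true i < Hd Dv (6*h+3) true (i-1)) + Sh h 3 i.+1
  = (Hd Dv (6*h+3) false (i-1) < Hd Du (6*h+3) false i) + (Hd Dv (6*h+3) true (i-1) < Hd Du (6*h+3) true i) + Sh h 3 i.
Proof.
move=> hh E.
have e0 : Hd Du (6*h+3) false i = 1*h + 2 by rewrite /Hd /Du /Dv; lia.
have e1 : Hd Du (6*h+3) true i = 1*h + 1 by rewrite /Hd /Du /Dv; lia.
have e2 : Hd Dv (6*h+3) false (i-1) = 1*h by rewrite /Hd /Du /Dv; lia.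
have e3 : Hd Dv (6*h+3) true (i-1) = 1*h - 1 by rewrite /Hd /Du /Dv; lia.
have e4 : Sh h 3 i.+1 = 2*h - 2 by shsolve.
have e5 : Sh h 3 i = 2*h - 4 by shsolve.
rewrite e0 e1 e2 e3 e4 e5; lia.
Qed.

Lemma mid_3_9 h i : 3 <= h -> i = 3*h - 1 ->
  (Hd Du (6*h+3) false i < Hd Dv (6*h+3) false (i-1)) + (Hd Du (6*h+3) true i < Hd Dv (6*h+3) true (i-1)) + Sh h 3 i.+1
  = (Hd Dv (6*h+3) false (i-1) < Hd Du (6*h+3) false i) + (Hd Dv (6*h+3) true (i-1) < Hd Du (6*h+3) true i) + Sh h 3 i.
Proof.
move=> hh E.
have e0 : Hd Du (6*h+3) false i = 1*h + 3 by rewrite /Hd /Du /Dv; lia.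
have e1 : Hd Du (6*h+3) true i = 1*h + 2 by rewrite /Hd /Du /Dv; lia.
have e2 : Hd Dv (6*h+3) false (i-1) = 1*h + 1 by rewrite /Hd /Du /Dv; lia.
have e3 : Hd Dv (6*h+3) true (i-1) = 1*h + 2 by rewrite /Hd /Du /Dv; lia.
have e4 : Sh h 3 i.+1 = 2*h - 1 by shsolve.
have e5 : Sh h 3 i = 2*h - 2 by shsolve.
rewrite e0 e1 e2 e3 e4 e5; lia.
Qed.

Lemma mid_3_10 h i : 3 <= h -> i = 3*h + 0 ->
  (Hd Du (6*h+3) false i < Hd Dv (6*h+3) false (i-1)) + (Hd Du (6*h+3) true i < Hd Dv (6*h+3) true (i-1)) + Sh h 3 i.+1
  = (Hd Dv (6*h+3) false (i-1) < Hd Du (6*h+3) false i) + (Hd Dv (6*h+3) true (i-1) < Hd Du (6*h+3) true i) + Sh h 3 i.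
Proof.
move=> hh E.
have e0 : Hd Du (6*h+3) false i = 1*h + 2 by rewrite /Hd /Du /Dv; lia.
have e1 : Hd Du (6*h+3) true i = 1*h + 1 by rewrite /Hd /Du /Dv; lia.
have e2 : Hd Dv (6*h+3) false (i-1) = 1*h + 2 by rewrite /Hd /Du /Dv; lia.
have e3 : Hd Dv (6*h+3) true (i-1) = 1*h + 3 by rewrite /Hd /Du /Dv; lia.
have e4 : Sh h 3 i.+1 = 2*h - 2 by shsolve.
have e5 : Sh h 3 i = 2*h - 1 by shsolve.
rewrite e0 e1 e2 e3 e4 e5; lia.
Qed.

Lemma mid_3_11 h i : 3 <= h -> i = 3*h + 1 ->
  (Hd Du (6*h+3) false i < Hd Dv (6*h+3) false (i-1)) + (Hd Du (6*h+3) true i < Hd Dv (6*h+3) true (i-1)) + Sh h 3 i.+1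
  = (Hd Dv (6*h+3) false (i-1) < Hd Du (6*h+3) false i) + (Hd Dv (6*h+3) true (i-1) < Hd Du (6*h+3) true i) + Sh h 3 i.
Proof.
move=> hh E.
have e0 : Hd Du (6*h+3) false i = 1*h + 3 by rewrite /Hd /Du /Dv; lia.
have e1 : Hd Du (6*h+3) true i = 1*h + 2 by rewrite /Hd /Du /Dv; lia.
have e2 : Hd Dv (6*h+3) false (i-1) = 1*h + 1 by rewrite /Hd /Du /Dv; lia.
have e3 : Hd Dv (6*h+3) true (i-1) = 1*h by rewrite /Hd /Du /Dv; lia.
have e4 : Sh h 3 i.+1 = 2*h by shsolve.
have e5 : Sh h 3 i = 2*h - 2 by shsolve.
rewrite e0 e1 e2 e3 e4 e5; lia.
Qed.

Lemma mid_3_12 h i : 3 <= h -> i = 3*h + 2 ->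
  (Hd Du (6*h+3) false i < Hd Dv (6*h+3) false (i-1)) + (Hd Du (6*h+3) true i < Hd Dv (6*h+3) true (i-1)) + Sh h 3 i.+1
  = (Hd Dv (6*h+3) false (i-1) < Hd Du (6*h+3) false i) + (Hd Dv (6*h+3) true (i-1) < Hd Du (6*h+3) true i) + Sh h 3 i.
Proof.
move=> hh E.
have e0 : Hd Du (6*h+3) false i = 1*h + 3 by rewrite /Hd /Du /Dv; lia.
have e1 : Hd Du (6*h+3) true i = 1*h + 2 by rewrite /Hd /Du /Dv; lia.
have e2 : Hd Dv (6*h+3) false (i-1) = 1*h + 2 by rewrite /Hd /Du /Dv; lia.
have e3 : Hd Dv (6*h+3) true (i-1) = 1*h + 3 by rewrite /Hd /Du /Dv; lia.
have e4 : Sh h 3 i.+1 = 2*h by shsolve.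
have e5 : Sh h 3 i = 2*h by shsolve.
rewrite e0 e1 e2 e3 e4 e5; lia.
Qed.

Lemma mid_3_13 h i : 3 <= h -> i = 3*h + 3 ->
  (Hd Du (6*h+3) false i < Hd Dv (6*h+3) false (i-1)) + (Hd Du (6*h+3) true i < Hd Dv (6*h+3) true (i-1)) + Sh h 3 i.+1
  = (Hd Dv (6*h+3) false (i-1) < Hd Du (6*h+3) false i) + (Hd Dv (6*h+3) true (i-1) < Hd Du (6*h+3) true i) + Sh h 3 i.
Proof.
move=> hh E.
have e0 : Hd Du (6*h+3) false i = 1*h + 2 by rewrite /Hd /Du /Dv; lia.
have e1 : Hd Du (6*h+3) true i = 1*h + 1 by rewrite /Hd /Du /Dv; lia.
have e2 : Hd Dv (6*h+3) false (i-1) = 1*h + 2 by rewrite /Hd /Du /Dv; lia.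
have e3 : Hd Dv (6*h+3) true (i-1) = 1*h + 3 by rewrite /Hd /Du /Dv; lia.
have e4 : Sh h 3 i.+1 = 2*h - 1 by shsolve.
have e5 : Sh h 3 i = 2*h by shsolve.
rewrite e0 e1 e2 e3 e4 e5; lia.
Qed.

Lemma mid_3_14 h i : 3 <= h -> i = 3*h + 4 ->
  (Hd Du (6*h+3) false i < Hd Dv (6*h+3) false (i-1)) + (Hd Du (6*h+3) true i < Hd Dv (6*h+3) true (i-1)) + Sh h 3 i.+1
  = (Hd Dv (6*h+3) false (i-1) < Hd Du (6*h+3) false i) + (Hd Dv (6*h+3) true (i-1) < Hd Du (6*h+3) true i) + Sh h 3 i.
Proof.
move=> hh E.
have e0 : Hd Du (6*h+3) false i = 1*h + 3 by rewrite /Hd /Du /Dv; lia.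
have e1 : Hd Du (6*h+3) true i = 1*h + 2 by rewrite /Hd /Du /Dv; lia.
have e2 : Hd Dv (6*h+3) false (i-1) = 1*h + 1 by rewrite /Hd /Du /Dv; lia.
have e3 : Hd Dv (6*h+3) true (i-1) = 1*h by rewrite /Hd /Du /Dv; lia.
have e4 : Sh h 3 i.+1 = 2*h + 1 by shsolve.
have e5 : Sh h 3 i = 2*h - 1 by shsolve.
rewrite e0 e1 e2 e3 e4 e5; lia.
Qed.

Lemma mid_3_15 h i : 3 <= h -> i = 3*h + 5 ->
  (Hd Du (6*h+3) false i < Hd Dv (6*h+3) false (i-1)) + (Hd Du (6*h+3) true i < Hd Dv (6*h+3) true (i-1)) + Sh h 3 i.+1
  = (Hd Dv (6*h+3) false (i-1) < Hd Du (6*h+3) false i) + (Hd Dv (6*h+3) true (i-1) < Hd Du (6*h+3) true i) + Sh h 3 i.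
Proof.
move=> hh E.
have e0 : Hd Du (6*h+3) false i = 1*h + 2 by rewrite /Hd /Du /Dv; lia.
have e1 : Hd Du (6*h+3) true i = 1*h + 1 by rewrite /Hd /Du /Dv; lia.
have e2 : Hd Dv (6*h+3) false (i-1) = 1*h + 2 by rewrite /Hd /Du /Dv; lia.
have e3 : Hd Dv (6*h+3) true (i-1) = 1*h + 3 by rewrite /Hd /Du /Dv; lia.
have e4 : Sh h 3 i.+1 = 2*h by shsolve.
have e5 : Sh h 3 i = 2*h + 1 by shsolve.
rewrite e0 e1 e2 e3 e4 e5; lia.
Qed.

Lemma mid_3_16 h i : 3 <= h -> i = 3*h + 6 ->
  (Hd Du (6*h+3) false i < Hd Dv (6*h+3) false (i-1)) + (Hd Du (6*h+3) true i < Hd Dv (6*h+3) true (i-1)) + Sh h 3 i.+1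
  = (Hd Dv (6*h+3) false (i-1) < Hd Du (6*h+3) false i) + (Hd Dv (6*h+3) true (i-1) < Hd Du (6*h+3) true i) + Sh h 3 i.
Proof.
move=> hh E.
have e0 : Hd Du (6*h+3) false i = 1*h + 1 by rewrite /Hd /Du /Dv; lia.
have e1 : Hd Du (6*h+3) true i = 1*h by rewrite /Hd /Du /Dv; lia.
have e2 : Hd Dv (6*h+3) false (i-1) = 1*h + 1 by rewrite /Hd /Du /Dv; lia.
have e3 : Hd Dv (6*h+3) true (i-1) = 1*h + 2 by rewrite /Hd /Du /Dv; lia.
have e4 : Sh h 3 i.+1 = 2*h - 1 by shsolve.
have e5 : Sh h 3 i = 2*h by shsolve.
rewrite e0 e1 e2 e3 e4 e5; lia.
Qed.

Lemma mid_4_9 h i : 3 <= h -> i = 3*h - 1 ->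
  (Hd Du (6*h+4) false i < Hd Dv (6*h+4) false (i-1)) + (Hd Du (6*h+4) true i < Hd Dv (6*h+4) true (i-1)) + Sh h 4 i.+1
  = (Hd Dv (6*h+4) false (i-1) < Hd Du (6*h+4) false i) + (Hd Dv (6*h+4) true (i-1) < Hd Du (6*h+4) true i) + Sh h 4 i.
Proof.
move=> hh E.
have e0 : Hd Du (6*h+4) false i = 1*h + 3 by rewrite /Hd /Du /Dv; lia.
have e1 : Hd Du (6*h+4) true i = 1*h + 2 by rewrite /Hd /Du /Dv; lia.
have e2 : Hd Dv (6*h+4) false (i-1) = 1*h + 1 by rewrite /Hd /Du /Dv; lia.
have e3 : Hd Dv (6*h+4) true (i-1) = 1*h + 2 by rewrite /Hd /Du /Dv; lia.
have e4 : Sh h 4 i.+1 = 2*h - 1 by shsolve.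
have e5 : Sh h 4 i = 2*h - 2 by shsolve.
rewrite e0 e1 e2 e3 e4 e5; lia.
Qed.

Lemma mid_4_10 h i : 3 <= h -> i = 3*h + 0 ->
  (Hd Du (6*h+4) false i < Hd Dv (6*h+4) false (i-1)) + (Hd Du (6*h+4) true i < Hd Dv (6*h+4) true (i-1)) + Sh h 4 i.+1
  = (Hd Dv (6*h+4) false (i-1) < Hd Du (6*h+4) false i) + (Hd Dv (6*h+4) true (i-1) < Hd Du (6*h+4) true i) + Sh h 4 i.
Proof.
move=> hh E.
have e0 : Hd Du (6*h+4) false i = 1*h + 2 by rewrite /Hd /Du /Dv; lia.
have e1 : Hd Du (6*h+4) true i = 1*h + 1 by rewrite /Hd /Du /Dv; lia.
have e2 : Hd Dv (6*h+4) false (i-1) = 1*h + 2 by rewrite /Hd /Du /Dv; lia.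
have e3 : Hd Dv (6*h+4) true (i-1) = 1*h + 3 by rewrite /Hd /Du /Dv; lia.
have e4 : Sh h 4 i.+1 = 2*h - 2 by shsolve.
have e5 : Sh h 4 i = 2*h - 1 by shsolve.
rewrite e0 e1 e2 e3 e4 e5; lia.
Qed.

Lemma mid_4_11 h i : 3 <= h -> i = 3*h + 1 ->
  (Hd Du (6*h+4) false i < Hd Dv (6*h+4) false (i-1)) + (Hd Du (6*h+4) true i < Hd Dv (6*h+4) true (i-1)) + Sh h 4 i.+1
  = (Hd Dv (6*h+4) false (i-1) < Hd Du (6*h+4) false i) + (Hd Dv (6*h+4) true (i-1) < Hd Du (6*h+4) true i) + Sh h 4 i.
Proof.
move=> hh E.
have e0 : Hd Du (6*h+4) false i = 1*h + 3 by rewrite /Hd /Du /Dv; lia.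
have e1 : Hd Du (6*h+4) true i = 1*h + 2 by rewrite /Hd /Du /Dv; lia.
have e2 : Hd Dv (6*h+4) false (i-1) = 1*h + 1 by rewrite /Hd /Du /Dv; lia.
have e3 : Hd Dv (6*h+4) true (i-1) = 1*h by rewrite /Hd /Du /Dv; lia.
have e4 : Sh h 4 i.+1 = 2*h by shsolve.
have e5 : Sh h 4 i = 2*h - 2 by shsolve.
rewrite e0 e1 e2 e3 e4 e5; lia.
Qed.

Lemma mid_4_12 h i : 3 <= h -> i = 3*h + 2 ->
  (Hd Du (6*h+4) false i < Hd Dv (6*h+4) false (i-1)) + (Hd Du (6*h+4) true i < Hd Dv (6*h+4) true (i-1)) + Sh h 4 i.+1
  = (Hd Dv (6*h+4) false (i-1) < Hd Du (6*h+4) false i) + (Hd Dv (6*h+4) true (i-1) < Hd Du (6*h+4) true i) + Sh h 4 i.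
Proof.
move=> hh E.
have e0 : Hd Du (6*h+4) false i = 1*h + 4 by rewrite /Hd /Du /Dv; lia.
have e1 : Hd Du (6*h+4) true i = 1*h + 3 by rewrite /Hd /Du /Dv; lia.
have e2 : Hd Dv (6*h+4) false (i-1) = 1*h + 2 by rewrite /Hd /Du /Dv; lia.
have e3 : Hd Dv (6*h+4) true (i-1) = 1*h + 1 by rewrite /Hd /Du /Dv; lia.
have e4 : Sh h 4 i.+1 = 2*h + 2 by shsolve.
have e5 : Sh h 4 i = 2*h by shsolve.
rewrite e0 e1 e2 e3 e4 e5; lia.
Qed.

Lemma mid_4_13 h i : 3 <= h -> i = 3*h + 3 ->
  (Hd Du (6*h+4) false i < Hd Dv (6*h+4) false (i-1)) + (Hd Du (6*h+4) true i < Hd Dv (6*h+4) true (i-1)) + Sh h 4 i.+1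
  = (Hd Dv (6*h+4) false (i-1) < Hd Du (6*h+4) false i) + (Hd Dv (6*h+4) true (i-1) < Hd Du (6*h+4) true i) + Sh h 4 i.
Proof.
move=> hh E.
have e0 : Hd Du (6*h+4) false i = 1*h + 3 by rewrite /Hd /Du /Dv; lia.
have e1 : Hd Du (6*h+4) true i = 1*h + 2 by rewrite /Hd /Du /Dv; lia.
have e2 : Hd Dv (6*h+4) false (i-1) = 1*h + 3 by rewrite /Hd /Du /Dv; lia.
have e3 : Hd Dv (6*h+4) true (i-1) = 1*h + 4 by rewrite /Hd /Du /Dv; lia.
have e4 : Sh h 4 i.+1 = 2*h + 1 by shsolve.
have e5 : Sh h 4 i = 2*h + 2 by shsolve.
rewrite e0 e1 e2 e3 e4 e5; lia.
Qed.

Lemma mid_4_14 h i : 3 <= h -> i = 3*h + 4 ->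
  (Hd Du (6*h+4) false i < Hd Dv (6*h+4) false (i-1)) + (Hd Du (6*h+4) true i < Hd Dv (6*h+4) true (i-1)) + Sh h 4 i.+1
  = (Hd Dv (6*h+4) false (i-1) < Hd Du (6*h+4) false i) + (Hd Dv (6*h+4) true (i-1) < Hd Du (6*h+4) true i) + Sh h 4 i.
Proof.
move=> hh E.
have e0 : Hd Du (6*h+4) false i = 1*h + 2 by rewrite /Hd /Du /Dv; lia.
have e1 : Hd Du (6*h+4) true i = 1*h + 1 by rewrite /Hd /Du /Dv; lia.
have e2 : Hd Dv (6*h+4) false (i-1) = 1*h + 2 by rewrite /Hd /Du /Dv; lia.
have e3 : Hd Dv (6*h+4) true (i-1) = 1*h + 1 by rewrite /Hd /Du /Dv; lia.
have e4 : Sh h 4 i.+1 = 2*h + 1 by shsolve.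
have e5 : Sh h 4 i = 2*h + 1 by shsolve.
rewrite e0 e1 e2 e3 e4 e5; lia.
Qed.

Lemma mid_4_15 h i : 3 <= h -> i = 3*h + 5 ->
  (Hd Du (6*h+4) false i < Hd Dv (6*h+4) false (i-1)) + (Hd Du (6*h+4) true i < Hd Dv (6*h+4) true (i-1)) + Sh h 4 i.+1
  = (Hd Dv (6*h+4) false (i-1) < Hd Du (6*h+4) false i) + (Hd Dv (6*h+4) true (i-1) < Hd Du (6*h+4) true i) + Sh h 4 i.
Proof.
move=> hh E.
have e0 : Hd Du (6*h+4) false i = 1*h + 3 by rewrite /Hd /Du /Dv; lia.
have e1 : Hd Du (6*h+4) true i = 1*h + 2 by rewrite /Hd /Du /Dv; lia.
have e2 : Hd Dv (6*h+4) false (i-1) = 1*h + 1 by rewrite /Hd /Du /Dv; lia.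
have e3 : Hd Dv (6*h+4) true (i-1) = 1*h by rewrite /Hd /Du /Dv; lia.
have e4 : Sh h 4 i.+1 = 2*h + 3 by shsolve.
have e5 : Sh h 4 i = 2*h + 1 by shsolve.
rewrite e0 e1 e2 e3 e4 e5; lia.
Qed.

Lemma mid_4_16 h i : 3 <= h -> i = 3*h + 6 ->
  (Hd Du (6*h+4) false i < Hd Dv (6*h+4) false (i-1)) + (Hd Du (6*h+4) true i < Hd Dv (6*h+4) true (i-1)) + Sh h 4 i.+1
  = (Hd Dv (6*h+4) false (i-1) < Hd Du (6*h+4) false i) + (Hd Dv (6*h+4) true (i-1) < Hd Du (6*h+4) true i) + Sh h 4 i.
Proof.
move=> hh E.
have e0 : Hd Du (6*h+4) false i = 1*h + 2 by rewrite /Hd /Du /Dv; lia.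
have e1 : Hd Du (6*h+4) true i = 1*h + 1 by rewrite /Hd /Du /Dv; lia.
have e2 : Hd Dv (6*h+4) false (i-1) = 1*h + 2 by rewrite /Hd /Du /Dv; lia.
have e3 : Hd Dv (6*h+4) true (i-1) = 1*h + 3 by rewrite /Hd /Du /Dv; lia.
have e4 : Sh h 4 i.+1 = 2*h + 2 by shsolve.
have e5 : Sh h 4 i = 2*h + 3 by shsolve.
rewrite e0 e1 e2 e3 e4 e5; lia.
Qed.

Lemma mid_5_9 h i : 2 <= h -> i = 3*h - 1 ->
  (Hd Du (6*h+5) false i < Hd Dv (6*h+5) false (i-1)) + (Hd Du (6*h+5) true i < Hd Dv (6*h+5) true (i-1)) + Sh h 5 i.+1
  = (Hd Dv (6*h+5) false (i-1) < Hd Du (6*h+5) false i) + (Hd Dv (6*h+5) true (i-1) < Hd Du (6*h+5) true i) + Sh h 5 i.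
Proof.
move=> hh E.
have e0 : Hd Du (6*h+5) false i = 1*h + 3 by rewrite /Hd /Du /Dv; lia.
have e1 : Hd Du (6*h+5) true i = 1*h + 2 by rewrite /Hd /Du /Dv; lia.
have e2 : Hd Dv (6*h+5) false (i-1) = 1*h + 1 by rewrite /Hd /Du /Dv; lia.
have e3 : Hd Dv (6*h+5) true (i-1) = 1*h + 2 by rewrite /Hd /Du /Dv; lia.
have e4 : Sh h 5 i.+1 = 2*h - 1 by shsolve.
have e5 : Sh h 5 i = 2*h - 2 by shsolve.
rewrite e0 e1 e2 e3 e4 e5; lia.
Qed.

Lemma mid_5_10 h i : 2 <= h -> i = 3*h + 0 ->
  (Hd Du (6*h+5) false i < Hd Dv (6*h+5) false (i-1)) + (Hd Du (6*h+5) true i < Hd Dv (6*h+5) true (i-1)) + Sh h 5 i.+1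
  = (Hd Dv (6*h+5) false (i-1) < Hd Du (6*h+5) false i) + (Hd Dv (6*h+5) true (i-1) < Hd Du (6*h+5) true i) + Sh h 5 i.
Proof.
move=> hh E.
have e0 : Hd Du (6*h+5) false i = 1*h + 2 by rewrite /Hd /Du /Dv; lia.
have e1 : Hd Du (6*h+5) true i = 1*h + 1 by rewrite /Hd /Du /Dv; lia.
have e2 : Hd Dv (6*h+5) false (i-1) = 1*h + 2 by rewrite /Hd /Du /Dv; lia.
have e3 : Hd Dv (6*h+5) true (i-1) = 1*h + 2 by rewrite /Hd /Du /Dv; lia.
have e4 : Sh h 5 i.+1 = 2*h - 2 by shsolve.
have e5 : Sh h 5 i = 2*h - 1 by shsolve.
rewrite e0 e1 e2 e3 e4 e5; lia.
Qed.

Lemma mid_5_11 h i : 2 <= h -> i = 3*h + 1 ->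
  (Hd Du (6*h+5) false i < Hd Dv (6*h+5) false (i-1)) + (Hd Du (6*h+5) true i < Hd Dv (6*h+5) true (i-1)) + Sh h 5 i.+1
  = (Hd Dv (6*h+5) false (i-1) < Hd Du (6*h+5) false i) + (Hd Dv (6*h+5) true (i-1) < Hd Du (6*h+5) true i) + Sh h 5 i.
Proof.
move=> hh E.
have e0 : Hd Du (6*h+5) false i = 1*h + 3 by rewrite /Hd /Du /Dv; lia.
have e1 : Hd Du (6*h+5) true i = 1*h + 2 by rewrite /Hd /Du /Dv; lia.
have e2 : Hd Dv (6*h+5) false (i-1) = 1*h + 1 by rewrite /Hd /Du /Dv; lia.
have e3 : Hd Dv (6*h+5) true (i-1) = 1*h by rewrite /Hd /Du /Dv; lia.
have e4 : Sh h 5 i.+1 = 2*h by shsolve.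
have e5 : Sh h 5 i = 2*h - 2 by shsolve.
rewrite e0 e1 e2 e3 e4 e5; lia.
Qed.

Lemma mid_5_12 h i : 2 <= h -> i = 3*h + 2 ->
  (Hd Du (6*h+5) false i < Hd Dv (6*h+5) false (i-1)) + (Hd Du (6*h+5) true i < Hd Dv (6*h+5) true (i-1)) + Sh h 5 i.+1
  = (Hd Dv (6*h+5) false (i-1) < Hd Du (6*h+5) false i) + (Hd Dv (6*h+5) true (i-1) < Hd Du (6*h+5) true i) + Sh h 5 i.
Proof.
move=> hh E.
have e0 : Hd Du (6*h+5) false i = 1*h + 3 by rewrite /Hd /Du /Dv; lia.
have e1 : Hd Du (6*h+5) true i = 1*h + 2 by rewrite /Hd /Du /Dv; lia.
have e2 : Hd Dv (6*h+5) false (i-1) = 1*h + 2 by rewrite /Hd /Du /Dv; lia.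
have e3 : Hd Dv (6*h+5) true (i-1) = 1*h + 3 by rewrite /Hd /Du /Dv; lia.
have e4 : Sh h 5 i.+1 = 2*h by shsolve.
have e5 : Sh h 5 i = 2*h by shsolve.
rewrite e0 e1 e2 e3 e4 e5; lia.
Qed.

Lemma mid_5_13 h i : 2 <= h -> i = 3*h + 3 ->
  (Hd Du (6*h+5) false i < Hd Dv (6*h+5) false (i-1)) + (Hd Du (6*h+5) true i < Hd Dv (6*h+5) true (i-1)) + Sh h 5 i.+1
  = (Hd Dv (6*h+5) false (i-1) < Hd Du (6*h+5) false i) + (Hd Dv (6*h+5) true (i-1) < Hd Du (6*h+5) true i) + Sh h 5 i.
Proof.
move=> hh E.
have e0 : Hd Du (6*h+5) false i = 1*h + 3 by rewrite /Hd /Du /Dv; lia.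
have e1 : Hd Du (6*h+5) true i = 1*h + 2 by rewrite /Hd /Du /Dv; lia.
have e2 : Hd Dv (6*h+5) false (i-1) = 1*h + 2 by rewrite /Hd /Du /Dv; lia.
have e3 : Hd Dv (6*h+5) true (i-1) = 1*h + 1 by rewrite /Hd /Du /Dv; lia.
have e4 : Sh h 5 i.+1 = 2*h + 2 by shsolve.
have e5 : Sh h 5 i = 2*h by shsolve.
rewrite e0 e1 e2 e3 e4 e5; lia.
Qed.

Lemma mid_5_14 h i : 2 <= h -> i = 3*h + 4 ->
  (Hd Du (6*h+5) false i < Hd Dv (6*h+5) false (i-1)) + (Hd Du (6*h+5) true i < Hd Dv (6*h+5) true (i-1)) + Sh h 5 i.+1
  = (Hd Dv (6*h+5) false (i-1) < Hd Du (6*h+5) false i) + (Hd Dv (6*h+5) true (i-1) < Hd Du (6*h+5) true i) + Sh h 5 i.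
Proof.
move=> hh E.
have e0 : Hd Du (6*h+5) false i = 1*h + 3 by rewrite /Hd /Du /Dv; lia.
have e1 : Hd Du (6*h+5) true i = 1*h + 2 by rewrite /Hd /Du /Dv; lia.
have e2 : Hd Dv (6*h+5) false (i-1) = 1*h + 2 by rewrite /Hd /Du /Dv; lia.
have e3 : Hd Dv (6*h+5) true (i-1) = 1*h + 1 by rewrite /Hd /Du /Dv; lia.
have e4 : Sh h 5 i.+1 = 2*h + 4 by shsolve.
have e5 : Sh h 5 i = 2*h + 2 by shsolve.
rewrite e0 e1 e2 e3 e4 e5; lia.
Qed.

Lemma mid_5_15 h i : 2 <= h -> i = 3*h + 5 ->
  (Hd Du (6*h+5) false i < Hd Dv (6*h+5) false (i-1)) + (Hd Du (6*h+5) true i < Hd Dv (6*h+5) true (i-1)) + Sh h 5 i.+1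
  = (Hd Dv (6*h+5) false (i-1) < Hd Du (6*h+5) false i) + (Hd Dv (6*h+5) true (i-1) < Hd Du (6*h+5) true i) + Sh h 5 i.
Proof.
move=> hh E.
have e0 : Hd Du (6*h+5) false i = 1*h + 2 by rewrite /Hd /Du /Dv; lia.
have e1 : Hd Du (6*h+5) true i = 1*h + 1 by rewrite /Hd /Du /Dv; lia.
have e2 : Hd Dv (6*h+5) false (i-1) = 1*h + 2 by rewrite /Hd /Du /Dv; lia.
have e3 : Hd Dv (6*h+5) true (i-1) = 1*h + 3 by rewrite /Hd /Du /Dv; lia.
have e4 : Sh h 5 i.+1 = 2*h + 3 by shsolve.
have e5 : Sh h 5 i = 2*h + 4 by shsolve.
rewrite e0 e1 e2 e3 e4 e5; lia.
Qed.

Lemma mid_5_16 h i : 2 <= h -> i = 3*h + 6 ->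
  (Hd Du (6*h+5) false i < Hd Dv (6*h+5) false (i-1)) + (Hd Du (6*h+5) true i < Hd Dv (6*h+5) true (i-1)) + Sh h 5 i.+1
  = (Hd Dv (6*h+5) false (i-1) < Hd Du (6*h+5) false i) + (Hd Dv (6*h+5) true (i-1) < Hd Du (6*h+5) true i) + Sh h 5 i.
Proof.
move=> hh E.
have e0 : Hd Du (6*h+5) false i = 1*h + 3 by rewrite /Hd /Du /Dv; lia.
have e1 : Hd Du (6*h+5) true i = 1*h + 2 by rewrite /Hd /Du /Dv; lia.
have e2 : Hd Dv (6*h+5) false (i-1) = 1*h + 1 by rewrite /Hd /Du /Dv; lia.
have e3 : Hd Dv (6*h+5) true (i-1) = 1*h by rewrite /Hd /Du /Dv; lia.
have e4 : Sh h 5 i.+1 = 2*h + 5 by shsolve.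
have e5 : Sh h 5 i = 2*h + 3 by shsolve.
rewrite e0 e1 e2 e3 e4 e5; lia.
Qed.

Lemma mid_5_17 h i : 2 <= h -> i = 3*h + 7 ->
  (Hd Du (6*h+5) false i < Hd Dv (6*h+5) false (i-1)) + (Hd Du (6*h+5) true i < Hd Dv (6*h+5) true (i-1)) + Sh h 5 i.+1
  = (Hd Dv (6*h+5) false (i-1) < Hd Du (6*h+5) false i) + (Hd Dv (6*h+5) true (i-1) < Hd Du (6*h+5) true i) + Sh h 5 i.
Proof.
move=> hh E.
have e0 : Hd Du (6*h+5) false i = 1*h + 2 by rewrite /Hd /Du /Dv; lia.
have e1 : Hd Du (6*h+5) true i = 1*h + 1 by rewrite /Hd /Du /Dv; lia.
have e2 : Hd Dv (6*h+5) false (i-1) = 1*h + 2 by rewrite /Hd /Du /Dv; lia.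
have e3 : Hd Dv (6*h+5) true (i-1) = 1*h + 2 by rewrite /Hd /Du /Dv; lia.
have e4 : Sh h 5 i.+1 = 2*h + 4 by shsolve.
have e5 : Sh h 5 i = 2*h + 5 by shsolve.
rewrite e0 e1 e2 e3 e4 e5; lia.
Qed.

Lemma HuL n s m : m + 8 <= n - m -> Hd Du n s m = Du s m.
Proof. move=> h; rewrite /Hd; apply/minn_idPl; exact: Dumono. Qed.
Lemma HvL n s m : m + 8 <= n - m -> Hd Dv n s m = Dv s m.
Proof. move=> h; rewrite /Hd; apply/minn_idPl; exact: Dvmono. Qed.
Lemma HuR n s m : n - m + 8 <= m -> Hd Du n s m = Du s (n - m).
Proof. move=> h; rewrite /Hd; apply/minn_idPr; exact: Dumono. Qed.
Lemma HvR n s m : n - m + 8 <= m -> Hd Dv n s m = Dv s (n - m).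
Proof. move=> h; rewrite /Hd; apply/minn_idPr; exact: Dvmono. Qed.

Lemma ShL h r i : i <= pN h r -> Sh h r i = Lf i.
Proof. by move=> hi; rewrite /Sh hi. Qed.
Lemma ShR h r i : pN h r < i -> qN h r <= i -> Sh h r i = Sn2 h r + Rg (6*h + r - i).
Proof. by move=> h1 h2; rewrite /Sh leqNgt h1 h2. Qed.

Lemma step h r i : r < 6 -> 16 < 6*h + r -> i < 6*h + r ->
  (Hd Du (6*h+r) false i < Hd Dv (6*h+r) false ((i + (6*h+r) - 1) %% (6*h+r)))
  + (Hd Du (6*h+r) true i < Hd Dv (6*h+r) true ((i + (6*h+r) - 1) %% (6*h+r))) + Sh h r i.+1
  = (Hd Dv (6*h+r) false ((i + (6*h+r) - 1) %% (6*h+r)) < Hd Du (6*h+r) false i)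
  + (Hd Dv (6*h+r) true ((i + (6*h+r) - 1) %% (6*h+r)) < Hd Du (6*h+r) true i) + Sh h r i.
Proof.
move=> r6 n17 iN.
have p5 : 5 <= pN h r by rewrite /pN; repeat (case: ifP => ?); lia.
case: (posnP i) => [->|i0].
  rewrite add0n modn_small; last lia.
  rewrite !HuL; try lia. rewrite !HvR; try lia.
  rewrite (_ : 6*h+r - (6*h+r-1) = 1); last lia.
  rewrite !ShL; try lia. done.
rewrite (_ : (i + (6*h+r) - 1) %% (6*h+r) = i - 1); last first.
  rewrite (_ : i + (6*h+r) - 1 = (i - 1) + (6*h+r)); last lia.
  rewrite modnDr modn_small; lia.
case: (leqP (2*i + 8) (6*h+r)) => hL.
  rewrite !HuL; try lia. rewrite !HvL; try lia.
  have hp : i.+1 <= pN h r by rewrite /pN; repeat (case: ifP => ?); lia.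
  rewrite !ShL; try lia. exact: leftL.
case: (leqP (6*h+r+10) (2*i)) => hR.
  rewrite !HuR; try lia. rewrite !HvR; try lia.
  have hp : pN h r < i by rewrite /pN; repeat (case: ifP => ?); lia.
  have hq : qN h r <= i by rewrite /qN; repeat (case: ifP => ?); lia.
  rewrite !ShR; try lia.
  rewrite (_ : 6*h+r - (i-1) = (6*h+r-i).+1); last lia.
  rewrite (_ : 6*h+r - i.+1 = (6*h+r-i) - 1); last lia.
  have := @rightL (6*h+r-i) ltac:(lia). lia.
have : r = 0 \/ r = 1 \/ r = 2 \/ r = 3 \/ r = 4 \/ r = 5 by lia.
case=> [E|[E|[E|[E|[E|E]]]]]; subst r.
- have : i = 3*h - 3 \/ i = 3*h - 2 \/ i = 3*h - 1 \/ i = 3*h + 0 \/ i = 3*h + 1 \/ i = 3*h + 2 \/ i = 3*h + 3 \/ i = 3*h + 4 by lia.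
  case=> [E|[E|[E|[E|[E|[E|[E|E]]]]]]].
  + exact: (@mid_0_7 h i ltac:(lia) E).
  + exact: (@mid_0_8 h i ltac:(lia) E).
  + exact: (@mid_0_9 h i ltac:(lia) E).
  + exact: (@mid_0_10 h i ltac:(lia) E).
  + exact: (@mid_0_11 h i ltac:(lia) E).
  + exact: (@mid_0_12 h i ltac:(lia) E).
  + exact: (@mid_0_13 h i ltac:(lia) E).
  + exact: (@mid_0_14 h i ltac:(lia) E).
- have : i = 3*h - 3 \/ i = 3*h - 2 \/ i = 3*h - 1 \/ i = 3*h + 0 \/ i = 3*h + 1 \/ i = 3*h + 2 \/ i = 3*h + 3 \/ i = 3*h + 4 \/ i = 3*h + 5 by lia.
  case=> [E|[E|[E|[E|[E|[E|[E|[E|E]]]]]]]].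
  + exact: (@mid_1_7 h i ltac:(lia) E).
  + exact: (@mid_1_8 h i ltac:(lia) E).
  + exact: (@mid_1_9 h i ltac:(lia) E).
  + exact: (@mid_1_10 h i ltac:(lia) E).
  + exact: (@mid_1_11 h i ltac:(lia) E).
  + exact: (@mid_1_12 h i ltac:(lia) E).
  + exact: (@mid_1_13 h i ltac:(lia) E).
  + exact: (@mid_1_14 h i ltac:(lia) E).
  + exact: (@mid_1_15 h i ltac:(lia) E).
- have : i = 3*h - 2 \/ i = 3*h - 1 \/ i = 3*h + 0 \/ i = 3*h + 1 \/ i = 3*h + 2 \/ i = 3*h + 3 \/ i = 3*h + 4 \/ i = 3*h + 5 by lia.
  case=> [E|[E|[E|[E|[E|[E|[E|E]]]]]]].
  + exact: (@mid_2_8 h i ltac:(lia) E).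
  + exact: (@mid_2_9 h i ltac:(lia) E).
  + exact: (@mid_2_10 h i ltac:(lia) E).
  + exact: (@mid_2_11 h i ltac:(lia) E).
  + exact: (@mid_2_12 h i ltac:(lia) E).
  + exact: (@mid_2_13 h i ltac:(lia) E).
  + exact: (@mid_2_14 h i ltac:(lia) E).
  + exact: (@mid_2_15 h i ltac:(lia) E).
- have : i = 3*h - 2 \/ i = 3*h - 1 \/ i = 3*h + 0 \/ i = 3*h + 1 \/ i = 3*h + 2 \/ i = 3*h + 3 \/ i = 3*h + 4 \/ i = 3*h + 5 \/ i = 3*h + 6 by lia.
  case=> [E|[E|[E|[E|[E|[E|[E|[E|E]]]]]]]].
  + exact: (@mid_3_8 h i ltac:(lia) E).
  + exact: (@mid_3_9 h i ltac:(lia) E).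
  + exact: (@mid_3_10 h i ltac:(lia) E).
  + exact: (@mid_3_11 h i ltac:(lia) E).
  + exact: (@mid_3_12 h i ltac:(lia) E).
  + exact: (@mid_3_13 h i ltac:(lia) E).
  + exact: (@mid_3_14 h i ltac:(lia) E).
  + exact: (@mid_3_15 h i ltac:(lia) E).
  + exact: (@mid_3_16 h i ltac:(lia) E).
- have : i = 3*h - 1 \/ i = 3*h + 0 \/ i = 3*h + 1 \/ i = 3*h + 2 \/ i = 3*h + 3 \/ i = 3*h + 4 \/ i = 3*h + 5 \/ i = 3*h + 6 by lia.
  case=> [E|[E|[E|[E|[E|[E|[E|E]]]]]]].
  + exact: (@mid_4_9 h i ltac:(lia) E).
  + exact: (@mid_4_10 h i ltac:(lia) E).
  + exact: (@mid_4_11 h i ltac:(lia) E).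
  + exact: (@mid_4_12 h i ltac:(lia) E).
  + exact: (@mid_4_13 h i ltac:(lia) E).
  + exact: (@mid_4_14 h i ltac:(lia) E).
  + exact: (@mid_4_15 h i ltac:(lia) E).
  + exact: (@mid_4_16 h i ltac:(lia) E).
- have : i = 3*h - 1 \/ i = 3*h + 0 \/ i = 3*h + 1 \/ i = 3*h + 2 \/ i = 3*h + 3 \/ i = 3*h + 4 \/ i = 3*h + 5 \/ i = 3*h + 6 \/ i = 3*h + 7 by lia.
  case=> [E|[E|[E|[E|[E|[E|[E|[E|E]]]]]]]].
  + exact: (@mid_5_9 h i ltac:(lia) E).
  + exact: (@mid_5_10 h i ltac:(lia) E).
  + exact: (@mid_5_11 h i ltac:(lia) E).
  + exact: (@mid_5_12 h i ltac:(lia) E).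
  + exact: (@mid_5_13 h i ltac:(lia) E).
  + exact: (@mid_5_14 h i ltac:(lia) E).
  + exact: (@mid_5_15 h i ltac:(lia) E).
  + exact: (@mid_5_16 h i ltac:(lia) E).
  + exact: (@mid_5_17 h i ltac:(lia) E).
Qed.

Lemma rot n c i d : c <= n -> ((i + d) %% n + n - c) %% n = ((i + n - c) %% n + d) %% n.
Proof.
move=> cn; rewrite -!addnBA // modnDml modnDml; congr (_ %% n); lia.
Qed.

Lemma rot2 n c i d : c <= n -> d <= n -> ((i + n - d) %% n + n - c) %% n = ((i + n - c) %% n + n - d) %% n.
Proof.
move=> cn dn; rewrite -!addnBA // modnDml modnDml; congr (_ %% n); lia.
Qed.

Lemma back n i d : i < n -> d <= n -> ((i + n - d) %% n + d) %% n = i.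
Proof.
move=> iN dn; rewrite -addnBA // modnDml -addnA subnK // modnDr modn_small //.
Qed.

Section Vert.
Variable F : bool -> nat -> nat.
Variable n : nat.
Hypothesis n17 : 16 < n.
Hypothesis FL1 : forall s m, m < n -> F s m <= F s ((m + dd s) %% n) + 1 /\ F s ((m + dd s) %% n) <= F s m + 1.
Hypothesis FL2 : forall m, F false m <= F true m + 1 /\ F true m <= F false m + 1.
Hypothesis FD : forall s m, m < n -> 0 < F s m ->
  F s ((m + dd s) %% n) < F s m \/ F s ((m + n - dd s) %% n) < F s m \/ F (~~ s) m < F s m.
Variable t0 : bool.
Hypothesis FZ : forall s m, m < n -> F s m = 0 -> s = t0 /\ m = 0.
Hypothesis FX : F t0 0 = 0.
Hypothesis Fb : forall s m, m < n -> F s m < n.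
Variable c : 'I_n.

Definition fv (w : GP_vertex n) : nat := F w.1 ((w.2 + n - c) %% n).

Lemma adj_same (s : bool) (i j : 'I_n) :
  GP_adj n 3 (s, i) (s, j) = (j == (i + dd s) %% n :> nat) || (i == (j + dd s) %% n :> nat).
Proof. by rewrite /GP_adj eqxx; case: s. Qed.

Lemma adj_diff (s : bool) (i j : 'I_n) : GP_adj n 3 (s, i) (~~ s, j) = (i == j).
Proof. by rewrite /GP_adj; case: s. Qed.

Lemma fv_lip z y : GP_adj n 3 z y -> fv z <= (fv y).+1.
Proof.
case: z y => [sa i] [sb j].
have cn : c <= n by apply: ltnW.
have mi : (i + n - c) %% n < n by rewrite ltn_mod; lia.
have mj : (j + n - c) %% n < n by rewrite ltn_mod; lia.
case: (boolP (sa == sb)) => [/eqP <-| ne].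
  rewrite adj_same /fv /= => /orP [/eqP ->|/eqP ->].
    rewrite rot //; have := FL1 sa mi; lia.
  rewrite rot //; have := FL1 sa mj; lia.
have -> : sb = ~~ sa by move: ne; case: sa; case: sb.
rewrite adj_diff /fv /= => /eqP ->.
have := FL2 ((j + n - c) %% n); clear ne; case: sa => /=; lia.
Qed.

Lemma fv_desc y : 0 < fv y -> exists y', GP_adj n 3 y y' /\ fv y' = (fv y).-1.
Proof.
case: y => [s i] hpos.
have cn : c <= n by apply: ltnW.
have dn : dd s <= n by clear hpos; rewrite /dd; case: s; lia.
have mi : (i + n - c) %% n < n by rewrite ltn_mod; lia.
have i1 : (i + dd s) %% n < n by rewrite ltn_mod; lia.
have i2 : (i + n - dd s) %% n < n by rewrite ltn_mod; lia.
case: (FD mi hpos) => [h|[h|h]].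
- exists (s, Ordinal i1); split; first by rewrite adj_same /= eqxx.
  have := fv_lip (z := (s, i)) (y := (s, Ordinal i1)); rewrite adj_same /= eqxx => /(_ isT).
  move: h; rewrite /fv /= rot //; lia.
- exists (s, Ordinal i2); split.
    by rewrite adj_same /= back // eqxx orbT.
  have := fv_lip (z := (s, i)) (y := (s, Ordinal i2)); rewrite adj_same /= back // eqxx orbT => /(_ isT).
  move: h; rewrite /fv /= rot2 //; lia.
- exists (~~ s, i); split; first by rewrite adj_diff.
  have := fv_lip (z := (s, i)) (y := (~~ s, i)); rewrite adj_diff eqxx => /(_ isT).
  move: h; rewrite /fv /=; lia.
Qed.

Lemma fv_zero y : fv y = 0 -> y = (t0, c).
Proof.
case: y => [s i]; rewrite /fv /= => h.
have cn : c <= n by apply: ltnW.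
have mi : (i + n - c) %% n < n by rewrite ltn_mod; lia.
have [-> hm] := FZ mi h.
congr (_, _); apply: val_inj => /=.
have ci := ltn_ord c; have ii := ltn_ord i.
case: (ltngtP i c) => // h1.
- move: hm; rewrite modn_small; lia.
- move: hm; rewrite (_ : i + n - c = (i - c) + n); last lia.
  rewrite modnDr modn_small; lia.
Qed.

Lemma fv_x : fv (t0, c) = 0.
Proof.
have cn : c <= n by apply: ltnW.
by rewrite /fv /= (_ : c + n - c = n) ?modnn ?FX //; lia.
Qed.

Lemma fv_bound w : fv w < 2 * n.
Proof.
rewrite /fv.
have cn : c <= n by apply: ltnW.
have mi : (w.2 + n - c) %% n < n by rewrite ltn_mod; lia.
have := Fb w.1 mi; lia.
Qed.

Lemma dist_fv w : dist (GP_adj n 3) w (t0, c) = fv w.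
Proof.
apply: dist_cert; [exact: fv_lip | exact: fv_desc | exact: fv_zero | exact: fv_x | rewrite card_prod card_bool card_ord; exact: fv_bound].
Qed.

End Vert.

Lemma cardW n (P : GP_vertex n -> bool) :
  #|[set w | P w]| = \sum_(i < n) (P (false, i) + P (true, i)).
Proof.
rewrite -sum1_card big_mkcond /=.
rewrite (eq_bigr (fun p => (P (p.1, p.2) : nat))); last by case=> s i _; rewrite in_set; case: (P _).
rewrite -(pair_big xpredT xpredT (fun s i => (P (s, i) : nat))) /= big_bool /=.
rewrite -big_split /=; apply: eq_bigr => i _; by rewrite addnC.
Qed.

Definition Qn n i := (Hd Du n false i < Hd Dv n false ((i + n - 1) %% n))
  + (Hd Du n true i < Hd Dv n true ((i + n - 1) %% n)).
Definition Pn n i := (Hd Dv n false ((i + n - 1) %% n) < Hd Du n false i)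
  + (Hd Dv n true ((i + n - 1) %% n) < Hd Du n true i).

Section Main.
Variable n : nat.
Hypothesis n17 : 16 < n.
Let n0 : 0 < n. Proof. lia. Qed.
Let n1 : 1 < n. Proof. lia. Qed.

Lemma distA w : dist (GP_adj n 3) w (false, Ordinal n0) = fv (Hd Du n) (Ordinal n0) w.
Proof.
apply: dist_fv => //.
- move=> s m hm. exact (NLip1 Du1 Du3 Du4 n17 s hm).
- exact (NLip2 Du2 n17).
- move=> s m hm hp; exact (NDesc Du4 Du5 n17 hm hp).
- move=> s m hm hz; exact (NZero Du0 n17 hm hz).
- rewrite /Hd /Du; lia.
- move=> s m hm; rewrite /Hd; have := Du4 s m; lia.
Qed.

Lemma distB w : dist (GP_adj n 3) w (true, Ordinal n1) = fv (Hd Dv n) (Ordinal n1) w.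
Proof.
apply: dist_fv => //.
- move=> s m hm; exact (NLip1 Dv1 Dv3 Dv4 n17 s hm).
- exact (NLip2 Dv2 n17).
- move=> s m hm hp; exact (NDesc Dv4 Dv5 n17 hm hp).
- move=> s m hm hz; exact (NZero Dv0 n17 hm hz).
- rewrite /Hd /Dv; lia.
- move=> s m hm; rewrite /Hd; have := Dv4 s m; lia.
Qed.

Lemma cardWxy : #|Wset (GP_adj n 3) (false, Ordinal n0) (true, Ordinal n1)| = \sum_(0 <= i < n) Qn n i.
Proof.
rewrite /Wset cardW big_mkord; apply: eq_bigr => i _.
rewrite !distA !distB /fv /= subn0 modnDr (modn_small (ltn_ord i)) /Qn.
by rewrite addnC.
Qed.

Lemma cardWyx : #|Wset (GP_adj n 3) (true, Ordinal n1) (false, Ordinal n0)| = \sum_(0 <= i < n) Pn n i.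
Proof.
rewrite /Wset cardW big_mkord; apply: eq_bigr => i _.
rewrite !distA !distB /fv /= subn0 modnDr (modn_small (ltn_ord i)) /Pn.
by rewrite addnC.
Qed.

Lemma dxy : dist (GP_adj n 3) (false, Ordinal n0) (true, Ordinal n1) = 2.
Proof.
rewrite distB /fv /= add0n modn_small; last lia.
rewrite HvR; last lia.
by rewrite (_ : n - (n - 1) = 1); last lia.
Qed.
End Main.

Lemma tele h r : r < 6 -> 16 < 6*h + r -> forall k, k <= 6*h + r ->
  \sum_(0 <= i < k) Qn (6*h+r) i + Sh h r k = \sum_(0 <= i < k) Pn (6*h+r) i + 2.
Proof.
move=> r6 n17; elim=> [|k IH] hk.
  rewrite !big_geq // ShL //; rewrite /pN; repeat (case: ifP => ?); lia.
rewrite !big_nat_recr //=.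
have := IH (ltnW hk); have := step r6 n17 hk.
rewrite /Qn /Pn; lia.
Qed.

Theorem proposition2p2 (n : nat) :
  16 < n -> ~ dist_balanced (GP_adj n 3) 2.
Proof.
move=> n17 H.
have := H _ _ (dxy n17).
rewrite cardWxy cardWyx.
have E : n = 6 * (n %/ 6) + n %% 6 by lia.
have r6 : n %% 6 < 6 by rewrite ltn_mod.
move: (n %/ 6) (n %% 6) E r6 => h r E r6.
have n17' : 16 < 6*h + r by lia.
have := tele r6 n17' (leqnn _).
rewrite -E.
have hp : pN h r < n by rewrite /pN; repeat (case: ifP => ?); lia.
have hq : qN h r <= n by rewrite /qN; repeat (case: ifP => ?); lia.
rewrite ShR -?E ?subnn //.
have : 3 <= Sn2 h r by rewrite /Sn2; repeat (case: ifP => ?); lia.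
rewrite /Rg /=; lia.
Qed.
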